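(* Assume (A). Let $v$ be a viscosity solution of class (L) of (E). Then $v$ has a right derivative $v'(0+)>0$ at $0$, $v\in C^2_b([0,\infty))$ (bounded with bounded first and second derivatives), $v$ is concave, $\lim_{x\to\infty}v(x)=f(0)/c$, and $\lim_{x\to\infty}v'(x)=0$.
   Context: Constants $\mu\in\mathbb R$, $\sigma>0$, $c>0$, $a>0$, $\lambda>0$; standing assumption (A): $a>\max\{1,2\mu\}$ and $\mu>\max\{c,\sigma^2/2\}$. $f(z)=\mu z+\lambda\ln\big[\lambda(e^{\frac{a}{\lambda}(1-z)}-1)/(1-z)\big]$ for $z\ne1$, $f(1)=\mu+\lambda\ln a$. (E) is $\frac12\sigma^2v''+f(v')-cv=0$ on $[0,\infty)$, $v(0)=0$. Viscosity sub/supersolution: upper (resp. lower) semicontinuous $u$ with $u(0)=0$ such that for all $x\in(0,\infty)$, $\varphi\in C^2(\mathbb R)$ with $0=(u-\varphi)(x)=\max_{(0,\infty)}(u-\varphi)$ (resp. $\min$): $\frac12\sigma^2\varphi''(x)+f(\varphi'(x))-cu(x)\ge0$ (resp. $\le0$); viscosity solution = continuous and both. Class (L): increasing and bounded on $[0,\infty)$. *)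

(* Defs.v *)
From Stdlib Require Import Reals Lra.
From Coquelicot Require Import Coquelicot.
Open Scope R_scope.

Definition fH (mu lam a z : R) : R :=
  if Req_EM_T z 1 then mu + lam * ln a
  else mu * z + lam * ln (lam * (exp (a / lam * (1 - z)) - 1) / (1 - z)).

Definition assumptionA (mu sigma c a lam : R) : Prop :=
  0 < sigma /\ 0 < c /\ 0 < a /\ 0 < lam /\
  a > Rmax 1 (2 * mu) /\ mu > Rmax c (sigma ^ 2 / 2).

Definition usc0 (u : R -> R) : Prop :=
  forall x, 0 <= x -> forall eps, 0 < eps -> exists delta, 0 < delta /\
    forall y, 0 <= y -> Rabs (y - x) < delta -> u y < u x + eps.
Definition lsc0 (u : R -> R) : Prop :=
  forall x, 0 <= x -> forall eps, 0 < eps -> exists delta, 0 < delta /\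
    forall y, 0 <= y -> Rabs (y - x) < delta -> u x - eps < u y.
Definition cont0 (u : R -> R) : Prop :=
  forall x, 0 <= x -> forall eps, 0 < eps -> exists delta, 0 < delta /\
    forall y, 0 <= y -> Rabs (y - x) < delta -> Rabs (u y - u x) < eps.

Definition C2R (phi dphi ddphi : R -> R) : Prop :=
  (forall x, is_derive phi x (dphi x)) /\
  (forall x, is_derive dphi x (ddphi x)) /\
  (forall x, continuous ddphi x).

Definition visc_sub (mu sigma c a lam : R) (u : R -> R) : Prop :=
  usc0 u /\ u 0 = 0 /\
  forall x phi dphi ddphi, 0 < x -> C2R phi dphi ddphi ->
    u x - phi x = 0 -> (forall y, 0 < y -> u y - phi y <= u x - phi x) ->
    1/2 * sigma ^ 2 * ddphi x + fH mu lam a (dphi x) - c * u x >= 0.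

Definition visc_super (mu sigma c a lam : R) (u : R -> R) : Prop :=
  lsc0 u /\ u 0 = 0 /\
  forall x phi dphi ddphi, 0 < x -> C2R phi dphi ddphi ->
    u x - phi x = 0 -> (forall y, 0 < y -> u y - phi y >= u x - phi x) ->
    1/2 * sigma ^ 2 * ddphi x + fH mu lam a (dphi x) - c * u x <= 0.

Definition visc_sol (mu sigma c a lam : R) (u : R -> R) : Prop :=
  cont0 u /\ visc_sub mu sigma c a lam u /\ visc_super mu sigma c a lam u.

Definition classL (u : R -> R) : Prop :=
  (forall x y, 0 <= x -> x <= y -> u x <= u y) /\
  (exists M, forall x, 0 <= x -> Rabs (u x) <= M).

Definition bounded0 (g : R -> R) : Prop :=
  exists M, forall x, 0 <= x -> Rabs (g x) <= M.

Definition concave0 (v : R -> R) : Prop :=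
  forall x y t, 0 <= x -> 0 <= y -> 0 <= t <= 1 ->
    t * v x + (1 - t) * v y <= v (t * x + (1 - t) * y).

Definition right_deriv0 (g : R -> R) (d : R) : Prop :=
  filterlim (fun h => (g h - g 0) / h) (at_right 0) (locally d).

(* Main.v *)
Require Import Defs.
From Stdlib Require Import Reals Lra Psatz ZArith Lia Classical.
From Coquelicot Require Import Coquelicot.
Open Scope R_scope.

Lemma le_of_small (X C r : R) : 0 < r -> (forall h, 0 < h < r -> X <= C * h) -> X <= 0.
Proof.
  intros Hr H. destruct (Rle_lt_dec X 0) as [H0|H0]; [exact H0|].
  set (h := Rmin (r/2) (X / (2 * (Rabs C + 1)))).
  assert (HA: 0 < Rabs C + 1) by (pose proof (Rabs_pos C); lra).
  assert (Hh1: h <= r/2) by apply Rmin_l.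
  assert (Hh2: h <= X / (2 * (Rabs C + 1))) by apply Rmin_r.
  assert (Hh0: 0 < h). { unfold h. apply Rmin_pos. lra. apply Rdiv_lt_0_compat; lra. }
  specialize (H h ltac:(lra)).
  assert (C * h <= Rabs C * h) by (apply Rmult_le_compat_r; [lra| apply Rle_abs]).
  assert (Rabs C * h <= (Rabs C + 1) * h) by (apply Rmult_le_compat_r; lra).
  assert ((Rabs C + 1) * h <= X/2).
  { apply Rle_trans with ((Rabs C + 1) * (X / (2 * (Rabs C + 1)))).
    apply Rmult_le_compat_l; lra. right. field. lra. }
  lra.
Qed.

Lemma chord_lower (u : R -> R) (al be k : R) : al < be ->
 (forall t, al <= t <= be -> continuity_pt u t) ->
 (forall x p q, al < x < be ->
    (forall y, al <= y <= be -> u x + p*(y-x) + q/2*(y-x)^2 <= u y) -> q <= k) ->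
 forall t, al <= t <= be ->
   u al + (u be - u al)*(t-al)/(be-al) - k/2*(t-al)*(be-t) <= u t.
Proof.
  intros Hab Hc Ht t Hint.
  destruct (Rle_lt_dec (u al + (u be - u al)*(t-al)/(be-al) - k/2*(t-al)*(be-t)) (u t)) as [H|H]; [exact H|].
  exfalso.
  set (eta := u al + (u be - u al)*(t-al)/(be-al) - k/2*(t-al)*(be-t) - u t).
  assert (Heta: 0 < eta) by (unfold eta; lra).
  assert (Htin: al < t < be).
  { split.
    - destruct (Req_dec t al) as [E|E]. subst t.
      exfalso. unfold eta in Heta. replace (u al + (u be - u al) * (al - al) / (be - al) - k / 2 * (al - al) * (be - al) - u al) with 0 in Heta by (field; lra). lra. lra.
    - destruct (Req_dec t be) as [E|E]. subst t.
      exfalso. unfold eta in Heta. replace (u al + (u be - u al) * (be - al) / (be - al) - k / 2 * (be - al) * (be - be) - u be) with 0 in Heta by (field; lra). lra. lra. }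
  set (P := (t-al)*(be-t)).
  assert (HP: 0 < P) by (unfold P; nra).
  set (kk := k + eta / P).
  set (s := (u be - u al)/(be-al)).
  set (Q := fun y => u al + s*(y-al) + kk/2*(y-al)*(y-be)).
  set (d := fun y => u y - Q y).
  assert (Hd: forall c, al <= c <= be -> continuity_pt d c).
  { intros c Hc'. unfold d, Q. apply continuity_pt_minus. apply Hc; exact Hc'. reg. }
  destruct (continuity_ab_min d al be (Rlt_le _ _ Hab) Hd) as [xs [Hmin Hxs]].
  assert (HeP: eta / P * P = eta) by (field; lra).
  assert (E: kk / 2 * (t - al) * (t - be) = - (k/2*(t-al)*(be-t)) - eta/2).
  { unfold kk. revert HeP. generalize (eta / P). intros eP HeP. rewrite <- HeP. unfold P. field. }
  assert (Hdt: d t < 0).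
  { unfold d, Q. rewrite E. unfold s.
    replace (u al + (u be - u al) / (be - al) * (t - al)) with (u al + (u be - u al)*(t-al)/(be-al)) by (field; lra).
    unfold eta. lra. }
  assert (Hdal: d al = 0) by (unfold d, Q; field).
  assert (Hdbe: d be = 0) by (unfold d, Q, s; field; lra).
  assert (Hm := Hmin t ltac:(lra)).
  assert (Hxs2: al < xs < be).
  { split.
    - destruct (Req_dec xs al) as [E1|E1]. rewrite E1 in Hm. lra. lra.
    - destruct (Req_dec xs be) as [E1|E1]. rewrite E1 in Hm. lra. lra. }
  assert (Hk := Ht xs (s + kk/2*(2*xs - al - be)) kk Hxs2).
  assert (kk <= k).
  { apply Hk. intros y Hy. specialize (Hmin y Hy). unfold d in Hmin.
    assert (Q y - Q xs = (s + kk/2*(2*xs - al - be))*(y-xs) + kk/2*(y-xs)^2) by (unfold Q; field).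
    lra. }
  unfold kk in H0. assert (0 < eta / P) by (apply Rdiv_lt_0_compat; lra). lra.
Qed.

Lemma abs_div_le (e d C : R) : 0 < d -> Rabs e <= C * d -> Rabs (e / d) <= C.
Proof.
  intros Hd H. unfold Rdiv. rewrite Rabs_mult. rewrite (Rabs_right (/d)) by (left; apply Rinv_0_lt_compat; lra).
  apply Rmult_le_reg_r with d; [lra|]. rewrite Rmult_assoc, Rinv_l by lra. lra.
Qed.

Definition slope (u : R -> R) x y := (u y - u x) / (y - x).

Lemma slope_sym u x y : x <> y -> slope u x y = slope u y x.
Proof. intros H. unfold slope. field. split; lra. Qed.

Lemma three_point (u : R -> R) (k p1 p2 p3 : R) : p1 < p2 < p3 ->
  Rabs (u p2 - (u p1 + (u p3 - u p1)*(p2-p1)/(p3-p1))) <= k/2*(p2-p1)*(p3-p2) ->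
  Rabs (slope u p1 p2 - slope u p1 p3) <= k/2*(p3-p2) /\
  Rabs (slope u p2 p3 - slope u p1 p3) <= k/2*(p2-p1).
Proof.
  intros Hp He. set (e := u p2 - (u p1 + (u p3 - u p1)*(p2-p1)/(p3-p1))) in *.
  split.
  - replace (slope u p1 p2 - slope u p1 p3) with (e / (p2 - p1)).
    2:{ unfold slope, e. field. split; lra. }
    apply abs_div_le. lra. replace (k / 2 * (p3 - p2) * (p2 - p1)) with (k / 2 * (p2 - p1) * (p3 - p2)) by field. exact He.
  - replace (slope u p2 p3 - slope u p1 p3) with (- e / (p3 - p2)).
    2:{ unfold slope, e. field. split; lra. }
    apply abs_div_le. lra. rewrite Rabs_Ropp. exact He.
Qed.

Lemma slope_compare (u : R -> R) (a0 b0 k : R) : 0 <= k ->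
  (forall al t be, a0 <= al -> al < t -> t < be -> be <= b0 ->
     Rabs (u t - (u al + (u be - u al)*(t-al)/(be-al))) <= k/2*(t-al)*(be-t)) ->
  forall x y z, a0 <= x <= b0 -> a0 <= y <= b0 -> a0 <= z <= b0 -> y <> x -> z <> x ->
  Rabs (slope u x y - slope u x z) <= k/2 * (Rabs (y - x) + Rabs (z - x)).
Proof.
  intros Hk H.
  assert (TP: forall p1 p2 p3, a0 <= p1 -> p1 < p2 -> p2 < p3 -> p3 <= b0 ->
    Rabs (slope u p1 p2 - slope u p1 p3) <= k/2*(p3-p2) /\
    Rabs (slope u p2 p3 - slope u p1 p3) <= k/2*(p2-p1)).
  { intros p1 p2 p3 H1 H2 H3 H4. apply three_point. lra. apply H; lra. }
  assert (Main: forall x y z, a0 <= x <= b0 -> a0 <= y <= b0 -> a0 <= z <= b0 -> y <> x -> z <> x -> y < z ->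
    Rabs (slope u x y - slope u x z) <= k/2 * (Rabs (y - x) + Rabs (z - x))).
  { intros x y z Hx Hy Hz Hyx Hzx Hyz.
    pose proof (Rabs_pos (y-x)). pose proof (Rabs_pos (z-x)).
    destruct (Rlt_le_dec x y) as [Hxy|Hxy].
    - destruct (TP x y z) as [T1 T2]; try lra.
      assert (Rabs (z - x) = z - x) by (apply Rabs_right; lra).
      assert (Rabs (y - x) = y - x) by (apply Rabs_right; lra).
      nra.
    - destruct (Rlt_le_dec x z) as [Hxz|Hxz].
      + destruct (TP y x z) as [T1 T2]; try lra.
        rewrite (slope_sym u x y) by lra.
        assert (Rabs (z - x) = z - x) by (apply Rabs_right; lra).
        assert (Rabs (y - x) = x - y) by (rewrite Rabs_left; lra).
        apply Rle_trans with (Rabs (slope u y x - slope u y z) + Rabs (slope u x z - slope u y z)).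
        replace (slope u y x - slope u x z) with ((slope u y x - slope u y z) - (slope u x z - slope u y z)) by ring.
        apply Rabs_triang_inv2 || (unfold Rminus; eapply Rle_trans; [apply Rabs_triang|]; rewrite Rabs_Ropp; lra).
        nra.
      + destruct (TP y z x) as [T1 T2]; try lra.
        rewrite (slope_sym u x y) by lra. rewrite (slope_sym u x z) by lra.
        assert (Rabs (z - x) = x - z) by (rewrite Rabs_left; lra).
        assert (Rabs (y - x) = x - y) by (rewrite Rabs_left; lra).
        replace (slope u y x - slope u z x) with (-(slope u z x - slope u y x)) by ring.
        rewrite Rabs_Ropp. nra. }
  intros x y z Hx Hy Hz Hyx Hzx.
  destruct (Rtotal_order y z) as [Hyz|[Hyz|Hyz]].
  - apply Main; auto.
  - subst z. unfold Rminus at 1. rewrite Rplus_opp_r, Rabs_R0. pose proof (Rabs_pos (y-x)). nra.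
  - rewrite <- Rabs_Ropp. replace (- (slope u x y - slope u x z)) with (slope u x z - slope u x y) by ring.
    rewrite Rplus_comm. apply Main; auto.
Qed.
Lemma nat_large (M : R) : exists N : nat, forall n, (N <= n)%nat -> M < INR n.
Proof.
  exists (Z.abs_nat (up M)). intros n Hn.
  destruct (archimed M) as [H1 _].
  apply le_INR in Hn. rewrite INR_IZR_INZ in Hn. rewrite Zabs2Nat.id_abs in Hn.
  assert (IZR (up M) <= IZR (Z.abs (up M))) by (apply IZR_le; lia).
  lra.
Qed.


Lemma quot_deriv (u : R -> R) (x r K : R) : 0 < r -> 0 <= K ->
  (forall y z, 0 < Rabs (y - x) < r -> 0 < Rabs (z - x) < r ->
     Rabs (slope u x y - slope u x z) <= K * (Rabs (y - x) + Rabs (z - x))) ->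
  is_derive u x (Derive u x) /\
  forall y, 0 < Rabs (y - x) < r -> Rabs (slope u x y - Derive u x) <= K * Rabs (y - x).
Proof.
  intros Hr HK H.
  set (w := fun n : nat => slope u x (x + r / (INR n + 2))).
  assert (Hpos: forall n:nat, 0 < r / (INR n + 2) < r).
  { intros n. pose proof (pos_INR n). split. apply Rdiv_lt_0_compat; lra.
    apply Rmult_lt_reg_r with (INR n + 2). lra. unfold Rdiv. rewrite Rmult_assoc, Rinv_l by lra. nra. }
  assert (Hab: forall n:nat, Rabs (x + r / (INR n + 2) - x) = r / (INR n + 2)).
  { intros n. replace (x + r / (INR n + 2) - x) with (r / (INR n + 2)) by ring. apply Rabs_right. specialize (Hpos n); lra. }
  assert (Hsmall: forall e, 0 < e -> exists N:nat, forall n, (N <= n)%nat -> K * (r / (INR n + 2)) < e).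
  { intros e He. destruct (nat_large (K * r / e)) as [N HN]. exists N. intros n Hn. specialize (HN n Hn).
    pose proof (pos_INR n).
    assert (K * r / e * e = K * r) by (field; lra).
    assert (K * (r / (INR n + 2)) * (INR n + 2) = K * r) by (field; lra).
    assert (0 <= K * (r / (INR n + 2))) by (apply Rmult_le_pos; [lra| left; apply Hpos]).
    nra. }
  assert (Hc: ex_lim_seq_cauchy w).
  { intros eps. destruct (Hsmall (eps/2)) as [N HN]. destruct eps; simpl; lra.
    exists N. intros n m Hn Hm. unfold w.
    eapply Rle_lt_trans. apply H. rewrite Hab. apply Hpos. rewrite Hab. apply Hpos.
    rewrite !Hab. pose proof (HN n Hn). pose proof (HN m Hm). lra. }
  apply ex_lim_seq_cauchy_corr in Hc. apply Lim_seq_correct' in Hc.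
  set (D := real (Lim_seq w)) in *.
  apply is_lim_seq_spec in Hc. simpl in Hc.
  assert (HB: forall y, 0 < Rabs (y - x) < r -> Rabs (slope u x y - D) <= K * Rabs (y - x)).
  { intros y Hy. destruct (Rle_lt_dec (Rabs (slope u x y - D)) (K * Rabs (y - x))) as [Hl|Hl]; [exact Hl|].
    exfalso. set (e := Rabs (slope u x y - D) - K * Rabs (y - x)).
    assert (He: 0 < e/2) by (unfold e; lra).
    destruct (Hc (mkposreal _ He)) as [N1 HN1]. destruct (Hsmall (e/2) He) as [N2 HN2].
    set (n := max N1 N2). specialize (HN1 n (Nat.le_max_l _ _)). specialize (HN2 n (Nat.le_max_r _ _)).
    simpl in HN1. specialize (H y (x + r / (INR n + 2)) Hy). rewrite Hab in H. specialize (H (Hpos n)).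
    fold (w n) in H.
    assert (Rabs (slope u x y - D) <= Rabs (slope u x y - w n) + Rabs (w n - D)).
    { replace (slope u x y - D) with ((slope u x y - w n) + (w n - D)) by ring. apply Rabs_triang. }
    unfold e in *. lra. }
  assert (Hd: is_derive u x D).
  { apply is_derive_Reals. intros eps Heps.
    assert (HK1: 0 < K + 1) by lra.
    exists (mkposreal (Rmin r (eps / (K+1))) ltac:(apply Rmin_pos; [lra| apply Rdiv_lt_0_compat; lra])).
    intros h Hh0 Hh. simpl in Hh.
    assert (Hh1: Rabs h < r) by (eapply Rlt_le_trans; [exact Hh| apply Rmin_l]).
    assert (Hh2: Rabs h < eps / (K+1)) by (eapply Rlt_le_trans; [exact Hh| apply Rmin_r]).
    assert (E: (u (x + h) - u x) / h = slope u x (x + h)) by (unfold slope; f_equal; ring).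
    rewrite E. replace h with (x + h - x) in Hh1, Hh2 by ring.
    assert (0 < Rabs (x + h - x)) by (replace (x+h-x) with h by ring; apply Rabs_pos_lt; exact Hh0).
    specialize (HB (x+h) (conj H0 Hh1)).
    assert (K * Rabs (x + h - x) <= K * (eps / (K+1))) by (apply Rmult_le_compat_l; lra).
    assert (K * (eps / (K+1)) < eps).
    { apply Rmult_lt_reg_r with (K+1). lra. replace (K * (eps / (K + 1)) * (K + 1)) with (K * eps) by (field; lra). nra. }
    lra. }
  rewrite (is_derive_unique _ _ _ Hd). split; [exact Hd| exact HB].
Qed.

Lemma two_sided (u : R -> R) (a0 b0 k : R) : 0 <= k ->
  (forall al t be, a0 <= al -> al < t -> t < be -> be <= b0 ->
     Rabs (u t - (u al + (u be - u al)*(t-al)/(be-al))) <= k/2*(t-al)*(be-t)) ->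
  forall x, a0 < x < b0 -> is_derive u x (Derive u x) /\
    forall y, a0 <= y <= b0 -> y <> x -> Rabs (slope u x y - Derive u x) <= k/2 * Rabs (y - x).
Proof.
  intros Hk H x Hx.
  pose proof (slope_compare u a0 b0 k Hk H) as SC.
  set (r := Rmin (x - a0) (b0 - x)).
  assert (Hr: 0 < r) by (unfold r; apply Rmin_pos; lra).
  assert (Hin: forall y, Rabs (y - x) < r -> a0 <= y <= b0).
  { intros y Hy. assert (r <= x - a0) by apply Rmin_l. assert (r <= b0 - x) by apply Rmin_r.
    apply Rabs_def2 in Hy. lra. }
  destruct (quot_deriv u x r (k/2) Hr ltac:(lra)) as [Hd HB].
  { intros y z Hy Hz. apply SC; try lra. apply Hin; lra. apply Hin; lra.
    intro E; subst; rewrite Rminus_diag, Rabs_R0 in Hy; lra.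
    intro E; subst; rewrite Rminus_diag, Rabs_R0 in Hz; lra. }
  split; [exact Hd|].
  intros y Hy Hyx.
  assert (L: Rabs (slope u x y - Derive u x) - k/2 * Rabs (y - x) <= 0).
  { apply (le_of_small _ k r Hr). intros h Hh.
    assert (Hz: 0 < Rabs (x + h - x) < r).
    { replace (x + h - x) with h by ring. rewrite Rabs_right by lra. lra. }
    specialize (HB _ Hz). specialize (SC x y (x+h) ltac:(lra) Hy (Hin _ (proj2 Hz)) Hyx ltac:(lra)).
    replace (x + h - x) with h in * by ring. assert (Rabs h = h) by (apply Rabs_right; lra).
    rewrite H0 in HB, SC.
    assert (Rabs (slope u x y - Derive u x) <= Rabs (slope u x y - slope u x (x+h)) + Rabs (slope u x (x+h) - Derive u x)).
    { replace (slope u x y - Derive u x) with ((slope u x y - slope u x (x+h)) + (slope u x (x+h) - Derive u x)) by ring. apply Rabs_triang. }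
    lra. }
  lra.
Qed.

Lemma two_sided_lip (u : R -> R) (a0 b0 k : R) : 0 <= k ->
  (forall al t be, a0 <= al -> al < t -> t < be -> be <= b0 ->
     Rabs (u t - (u al + (u be - u al)*(t-al)/(be-al))) <= k/2*(t-al)*(be-t)) ->
  forall x y, a0 < x < b0 -> a0 < y < b0 -> Rabs (Derive u x - Derive u y) <= k * Rabs (x - y).
Proof.
  intros Hk H x y Hx Hy.
  destruct (Req_dec x y) as [E|E]. subst. rewrite !Rminus_diag, Rabs_R0. lra.
  destruct (two_sided u a0 b0 k Hk H x Hx) as [_ B1].
  destruct (two_sided u a0 b0 k Hk H y Hy) as [_ B2].
  specialize (B1 y ltac:(lra) ltac:(auto)). specialize (B2 x ltac:(lra) ltac:(auto)).
  rewrite <- (slope_sym u x y E) in B2 by auto.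
  rewrite (Rabs_minus_sym y x) in B1.
  replace (Derive u x - Derive u y) with (-(slope u x y - Derive u x) + (slope u x y - Derive u y)) by ring.
  eapply Rle_trans. apply Rabs_triang. rewrite Rabs_Ropp. lra.
Qed.

Lemma chord_upper (u : R -> R) (al be k : R) : al < be ->
 (forall t, al <= t <= be -> continuity_pt u t) ->
 (forall x p q, al < x < be ->
    (forall y, al <= y <= be -> u y <= u x + p*(y-x) + q/2*(y-x)^2) -> -k <= q) ->
 forall t, al <= t <= be ->
   u t <= u al + (u be - u al)*(t-al)/(be-al) + k/2*(t-al)*(be-t).
Proof.
  intros Hab Hc Ht t Hint.
  pose proof (chord_lower (fun y => - u y) al be k Hab) as CL.
  assert (H := CL ltac:(intros; apply continuity_pt_opp; apply Hc; auto)).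
  assert (H2 := H ltac:(intros x p q Hx Hy; assert (-k <= -q); [apply (Ht x (-p) (-q) Hx); intros y Hy'; specialize (Hy y Hy'); lra | lra]) t Hint).
  simpl in H2.
  replace ((- u be - - u al) * (t - al) / (be - al)) with (- ((u be - u al) * (t - al) / (be - al))) in H2 by (field; lra).
  lra.
Qed.

Lemma chord_both (u : R -> R) (a0 b0 k : R) :
 (forall t, a0 <= t <= b0 -> continuity_pt u t) ->
 (forall al be x p q, a0 <= al -> be <= b0 -> al < x < be ->
    (forall y, al <= y <= be -> u x + p*(y-x) + q/2*(y-x)^2 <= u y) -> q <= k) ->
 (forall al be x p q, a0 <= al -> be <= b0 -> al < x < be ->
    (forall y, al <= y <= be -> u y <= u x + p*(y-x) + q/2*(y-x)^2) -> -k <= q) ->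
 (forall al t be, a0 <= al -> al < t -> t < be -> be <= b0 ->
     Rabs (u t - (u al + (u be - u al)*(t-al)/(be-al))) <= k/2*(t-al)*(be-t)).
Proof.
  intros Hc HL HU al t be H1 H2 H3 H4.
  assert (A := chord_lower u al be k ltac:(lra) ltac:(intros; apply Hc; lra)
     ltac:(intros; eapply HL; eauto) t ltac:(lra)).
  assert (B := chord_upper u al be k ltac:(lra) ltac:(intros; apply Hc; lra)
     ltac:(intros; eapply HU; eauto) t ltac:(lra)).
  apply Rabs_le. lra.
Qed.

Lemma abs_le_inv (x a : R) : Rabs x <= a -> -a <= x <= a.
Proof. intros H. pose proof (Rle_abs x). pose proof (Rle_abs (-x)). rewrite Rabs_Ropp in H1. lra. Qed.

Lemma quartic_dom (M p q r d : R) : 0 < r -> 0 <= M -> r <= Rabs d ->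
  p*d + q/2*d^2 - (2*M/r^4 + Rabs p/r^3 + Rabs q/(2*r^2))*d^4 <= -2*M.
Proof.
  intros Hr HM Hd.
  set (t := Rabs d) in *.
  assert (H2: d^2 = t^2) by (unfold t; destruct (Rcase_abs d); [rewrite Rabs_left by lra | rewrite Rabs_right by lra]; ring).
  assert (H4: d^4 = t^4) by (replace (d^4) with ((d^2)^2) by ring; rewrite H2; ring).
  assert (Hpd: p*d <= Rabs p * t) by (unfold t; rewrite <- Rabs_mult; apply Rle_abs).
  assert (Hq: q/2*d^2 <= Rabs q/2 * t^2).
  { rewrite H2. apply Rmult_le_compat_r. apply pow2_ge_0. pose proof (Rle_abs q). lra. }
  rewrite H4.
  set (m := t / r).
  assert (Ht: t = m * r) by (unfold m; field; lra).
  assert (Hm: 1 <= m).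
  { unfold m. apply Rmult_le_reg_r with r. lra. unfold Rdiv. rewrite Rmult_assoc, Rinv_l by lra. lra. }
  assert (E: (2*M/r^4 + Rabs p/r^3 + Rabs q/(2*r^2))*t^4 = 2*M*m^4 + Rabs p * r * m^4 + Rabs q/2*r^2*m^4).
  { rewrite Ht. field. lra. }
  rewrite E.
  assert (m^2 >= m) by nra. assert (Hm4: m^4 = m^2*m^2) by ring. assert (m^4 >= m^2) by nra. assert (m^4 >= 1) by nra.
  pose proof (Rabs_pos p). pose proof (Rabs_pos q).
  assert (Rabs p * t = Rabs p * r * m) by (rewrite Ht; ring).
  assert (Rabs q / 2 * t^2 = Rabs q/2*r^2*m^2) by (rewrite Ht; field).
  assert (Rabs p * r * m^4 >= Rabs p * r * m) by (apply Rle_ge, Rmult_le_compat_l; nra).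
  assert (Rabs q/2*r^2*m^4 >= Rabs q/2*r^2*m^2) by (apply Rle_ge, Rmult_le_compat_l; [apply Rmult_le_pos; [lra| apply pow2_ge_0]| lra]).
  assert (2*M*m^4 >= 2*M) by nra.
  lra.
Qed.

Lemma test_C2 (x v0 p q K : R) :
  C2R (fun y => v0 + p*(y-x) + q/2*(y-x)^2 + K*(y-x)^4)
      (fun y => p + q*(y-x) + 4*K*(y-x)^3)
      (fun y => q + 12*K*(y-x)^2).
Proof.
  split; [|split].
  - intros y. auto_derive. auto. field.
  - intros y. auto_derive. auto. field.
  - intros y. apply continuity_pt_filterlim. reg.
Qed.

Lemma test_below (mu sigma c a lam : R) (v : R -> R) (M x al be p q : R) :
  visc_super mu sigma c a lam v -> (forall y, 0 <= y -> Rabs (v y) <= M) ->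
  0 < al -> al < x < be ->
  (forall y, al <= y <= be -> v x + p*(y-x) + q/2*(y-x)^2 <= v y) ->
  1/2*sigma^2*q + fH mu lam a p - c*v x <= 0.
Proof.
  intros [_ [_ Hs]] HM Hal Hx Ht.
  assert (HM0: 0 <= M) by (specialize (HM 0 (Rle_refl 0)); pose proof (Rabs_pos (v 0)); lra).
  set (r := Rmin (x - al) (be - x)).
  assert (Hr: 0 < r) by (unfold r; apply Rmin_pos; lra).
  set (K := - (2*M/r^4 + Rabs p/r^3 + Rabs q/(2*r^2))).
  assert (H := Hs x _ _ _ ltac:(lra) (test_C2 x (v x) p q K)).
  cbv beta in H.
  replace (x - x) with 0 in H by ring.
  replace (q + 12 * K * 0 ^ 2) with q in H by ring.
  replace (p + q * 0 + 4 * K * 0 ^ 3) with p in H by ring.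
  apply H.
  - ring.
  - intros y Hy. replace (v x - (v x + p * 0 + q / 2 * 0 ^ 2 + K * 0 ^ 4)) with 0 by ring.
    apply Rle_ge.
    destruct (Rle_lt_dec al y) as [H1|H1]; [destruct (Rle_lt_dec y be) as [H2|H2]|].
    + specialize (Ht y (conj H1 H2)). assert (0 <= (y-x)^4) by (replace ((y-x)^4) with (((y-x)^2)^2) by ring; apply pow2_ge_0).
      unfold K. assert (0 <= 2*M/r^4 + Rabs p/r^3 + Rabs q/(2*r^2)).
      { pose proof (Rabs_pos p). pose proof (Rabs_pos q).
        assert (0 < r^4) by (apply pow_lt; lra). assert (0 < r^3) by (apply pow_lt; lra). assert (0 < 2*r^2) by (assert (0<r^2) by (apply pow_lt; lra); lra).
        repeat apply Rplus_le_le_0_compat; apply Rmult_le_pos; try lra; left; apply Rinv_0_lt_compat; lra. }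
      nra.
    + assert (r <= Rabs (y - x)). { assert (r <= be - x) by apply Rmin_r. rewrite Rabs_right; lra. }
      pose proof (quartic_dom M p q r (y-x) Hr HM0 H0). fold K in H3.
      pose proof (abs_le_inv _ _ (HM x ltac:(lra))). specialize (HM y ltac:(lra)). apply abs_le_inv in HM. unfold K in *. lra.
    + assert (r <= Rabs (y - x)). { assert (r <= x - al) by apply Rmin_l. rewrite Rabs_left; lra. }
      pose proof (quartic_dom M p q r (y-x) Hr HM0 H0).
      pose proof (abs_le_inv _ _ (HM x ltac:(lra))). specialize (HM y ltac:(lra)). apply abs_le_inv in HM. unfold K in *. lra.
Qed.

Lemma test_above (mu sigma c a lam : R) (v : R -> R) (M x al be p q : R) :
  visc_sub mu sigma c a lam v -> (forall y, 0 <= y -> Rabs (v y) <= M) ->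
  0 < al -> al < x < be ->
  (forall y, al <= y <= be -> v y <= v x + p*(y-x) + q/2*(y-x)^2) ->
  1/2*sigma^2*q + fH mu lam a p - c*v x >= 0.
Proof.
  intros [_ [_ Hs]] HM Hal Hx Ht.
  assert (HM0: 0 <= M) by (specialize (HM 0 (Rle_refl 0)); pose proof (Rabs_pos (v 0)); lra).
  set (r := Rmin (x - al) (be - x)).
  assert (Hr: 0 < r) by (unfold r; apply Rmin_pos; lra).
  set (K := (2*M/r^4 + Rabs p/r^3 + Rabs q/(2*r^2))).
  assert (HK: 0 <= K).
  { pose proof (Rabs_pos p). pose proof (Rabs_pos q).
    assert (0 < r^4) by (apply pow_lt; lra). assert (0 < r^3) by (apply pow_lt; lra). assert (0 < 2*r^2) by (assert (0<r^2) by (apply pow_lt; lra); lra).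
    unfold K. repeat apply Rplus_le_le_0_compat; apply Rmult_le_pos; try lra; left; apply Rinv_0_lt_compat; lra. }
  assert (H := Hs x _ _ _ ltac:(lra) (test_C2 x (v x) p q K)).
  cbv beta in H.
  replace (x - x) with 0 in H by ring.
  replace (q + 12 * K * 0 ^ 2) with q in H by ring.
  replace (p + q * 0 + 4 * K * 0 ^ 3) with p in H by ring.
  apply H.
  - ring.
  - intros y Hy. replace (v x - (v x + p * 0 + q / 2 * 0 ^ 2 + K * 0 ^ 4)) with 0 by ring.
    destruct (Rle_lt_dec al y) as [H1|H1]; [destruct (Rle_lt_dec y be) as [H2|H2]|].
    + specialize (Ht y (conj H1 H2)). assert (0 <= (y-x)^4) by (replace ((y-x)^4) with (((y-x)^2)^2) by ring; apply pow2_ge_0).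
      nra.
    + assert (r <= Rabs (y - x)). { assert (r <= be - x) by apply Rmin_r. rewrite Rabs_right; lra. }
      pose proof (quartic_dom M (-p) (-q) r (y-x) Hr HM0 H0) as QD. rewrite !Rabs_Ropp in QD. fold K in QD.
      pose proof (abs_le_inv _ _ (HM x ltac:(lra))). specialize (HM y ltac:(lra)). apply abs_le_inv in HM. lra.
    + assert (r <= Rabs (y - x)). { assert (r <= x - al) by apply Rmin_l. rewrite Rabs_left; lra. }
      pose proof (quartic_dom M (-p) (-q) r (y-x) Hr HM0 H0) as QD. rewrite !Rabs_Ropp in QD. fold K in QD.
      pose proof (abs_le_inv _ _ (HM x ltac:(lra))). specialize (HM y ltac:(lra)). apply abs_le_inv in HM. lra.
Qed.



Lemma exp_le (x y : R) : x <= y -> exp x <= exp y.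
Proof. intros [H|H]. left; apply exp_increasing; auto. subst; lra. Qed.

Lemma locally_R (x : R) (P : R -> Prop) : (exists d, 0 < d /\ forall y, Rabs (y - x) < d -> P y) -> locally x P.
Proof. intros [d [Hd H]]. exists (mkposreal d Hd). intros y Hy. apply H. exact Hy. Qed.

Lemma derive_cont (f : R -> R) x : ex_derive f x -> continuity_pt f x.
Proof. intros H. apply continuity_pt_filterlim. apply (ex_derive_continuous (K:=R_AbsRing) (V:=R_NormedModule) f x). exact H. Qed.

Lemma mvt_bound (f df : R -> R) (C : R) (n : nat) : 0 <= C ->
  (forall s, is_derive f s (df s)) -> f 0 = 0 ->
  (forall s, Rabs (df s) <= C * Rabs s ^ n * exp (Rabs s)) ->
  forall t, Rabs (f t) <= C * Rabs t ^ (S n) * exp (Rabs t).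
Proof.
  intros HC Hd H0 Hb t.
  destruct (MVT_gen f 0 t df) as [xi [Hxi E]].
  { intros; apply Hd. }
  { intros; apply derive_cont. eexists; apply Hd. }
  rewrite H0, Rminus_0_r, Rminus_0_r in E. rewrite E.
  assert (Hx: Rabs xi <= Rabs t).
  { unfold Rmin, Rmax in Hxi. destruct (Rle_dec 0 t).
    rewrite !Rabs_right; lra. rewrite (Rabs_left t) by lra. apply Rabs_le. lra. }
  rewrite Rabs_mult. simpl pow.
  specialize (Hb xi).
  assert (Rabs xi ^ n <= Rabs t ^ n) by (apply pow_incr; split; [apply Rabs_pos| exact Hx]).
  assert (exp (Rabs xi) <= exp (Rabs t)) by (apply exp_le; exact Hx).
  assert (P1: C * Rabs xi ^ n * exp (Rabs xi) <= C * Rabs t ^ n * exp (Rabs t)).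
  { apply Rmult_le_compat. apply Rmult_le_pos; [lra| apply pow_le, Rabs_pos]. left; apply exp_pos.
    apply Rmult_le_compat_l; lra. lra. }
  assert (P2: Rabs (df xi) * Rabs t <= C * Rabs t ^ n * exp (Rabs t) * Rabs t).
  { apply Rmult_le_compat_r. apply Rabs_pos. lra. }
  eapply Rle_trans. exact P2. right. ring.
Qed.

Lemma exp_b0 t : Rabs (exp t - 1) <= 1 * Rabs t ^ 1 * exp (Rabs t).
Proof.
  apply (mvt_bound (fun t => exp t - 1) exp 1 0). lra.
  intros s. auto_derive. auto. ring.
  rewrite exp_0. ring.
  intros s. rewrite Rabs_right by (left; apply exp_pos). simpl. rewrite Rmult_1_l, Rmult_1_l. apply exp_le, Rle_abs.
Qed.

Lemma exp_b1 t : Rabs (exp t - 1 - t) <= 1 * Rabs t ^ 2 * exp (Rabs t).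
Proof.
  apply (mvt_bound (fun t => exp t - 1 - t) (fun t => exp t - 1) 1 1). lra.
  intros s. auto_derive. auto. ring.
  rewrite exp_0. ring.
  intros s. apply exp_b0.
Qed.

Lemma exp_b2 t : Rabs (exp t - 1 - t - t^2/2) <= 1 * Rabs t ^ 3 * exp (Rabs t).
Proof.
  apply (mvt_bound (fun t => exp t - 1 - t - t^2/2) (fun t => exp t - 1 - t) 1 2). lra.
  intros s. auto_derive. auto. field.
  rewrite exp_0. field.
  intros s. apply exp_b1.
Qed.

Definition Phi0 (w : R) : R := if Req_EM_T w 0 then 1 else (exp w - 1) / w.

Lemma Phi0_mvt w : exists xi, Rmin 0 w <= xi <= Rmax 0 w /\ Phi0 w = exp xi.
Proof.
  unfold Phi0. destruct (Req_EM_T w 0) as [E|E].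
  - exists 0. subst. rewrite Rmin_left, Rmax_left by lra. rewrite exp_0. lra.
  - destruct (MVT_gen exp 0 w exp) as [xi [Hxi Ex]].
    { intros; apply is_derive_exp. }
    { intros; apply derive_cont. eexists; apply is_derive_exp. }
    exists xi. split; auto. rewrite exp_0 in Ex. rewrite Ex. field. lra.
Qed.

Lemma Phi0_pos w : 0 < Phi0 w.
Proof. destruct (Phi0_mvt w) as [xi [_ E]]. rewrite E. apply exp_pos. Qed.

Lemma Phi0_deriv0 : is_derive Phi0 0 (1/2).
Proof.
  apply is_derive_Reals. intros eps Heps.
  exists (mkposreal (Rmin 1 (eps/3)) ltac:(apply Rmin_pos; lra)).
  intros h Hh0 Hh. simpl in Hh.
  assert (H1: Rabs h < 1) by (eapply Rlt_le_trans; [exact Hh| apply Rmin_l]).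
  assert (H2: Rabs h < eps/3) by (eapply Rlt_le_trans; [exact Hh| apply Rmin_r]).
  unfold Phi0. rewrite Rplus_0_l.
  destruct (Req_EM_T h 0) as [E|E]; [contradiction|].
  destruct (Req_EM_T 0 0) as [_|E2]; [|lra].
  replace ((exp h - 1) / h - 1) with ((exp h - 1 - h)/h) by (field; auto).
  replace ((exp h - 1 - h) / h / h - 1 / 2) with ((exp h - 1 - h - h^2/2) / h^2) by (field; auto).
  pose proof (exp_b2 h) as B.
  assert (Hh2: 0 < Rabs h) by (apply Rabs_pos_lt; auto).
  assert (Rabs (h^2) = Rabs h ^ 2) by (rewrite <- RPow_abs; auto).
  unfold Rdiv. rewrite Rabs_mult, Rabs_inv, H.
  assert (exp (Rabs h) <= 3) by (eapply Rle_trans; [apply exp_le; left; exact H1| apply exp_le_3]).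
  assert (Rabs (exp h - 1 - h - h ^ 2 * / 2) <= Rabs h ^ 2 * (Rabs h * 3)).
  { replace (h ^ 2 * / 2) with (h^2/2) by field. eapply Rle_trans. exact B.
    replace (1 * Rabs h ^ 3 * exp (Rabs h)) with (Rabs h ^ 2 * (Rabs h * exp (Rabs h))) by ring.
    apply Rmult_le_compat_l. apply pow_le, Rabs_pos. apply Rmult_le_compat_l. apply Rabs_pos. auto. }
  assert (0 < Rabs h ^ 2) by (apply pow_lt; auto).
  apply Rle_lt_trans with (Rabs h ^ 2 * (Rabs h * 3) * / Rabs h ^ 2).
  apply Rmult_le_compat_r. left; apply Rinv_0_lt_compat; auto. auto.
  replace (Rabs h ^ 2 * (Rabs h * 3) * / Rabs h ^ 2) with (Rabs h * 3) by (field; lra). lra.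
Qed.

Lemma Phi0_ex_derive w : ex_derive Phi0 w.
Proof.
  destruct (Req_EM_T w 0) as [E|E].
  - subst. eexists. apply Phi0_deriv0.
  - apply (ex_derive_ext_loc (fun t => (exp t - 1) / t)).
    + apply locally_R. exists (Rabs w). split. apply Rabs_pos_lt; auto.
      intros y Hy. unfold Phi0. destruct (Req_EM_T y 0) as [E2|E2]; auto.
      subst. rewrite Rminus_0_l, Rabs_Ropp in Hy. lra.
    + auto_derive. auto.
Qed.

Lemma fH_repr (mu lam a z : R) : 0 < lam -> 0 < a ->
  fH mu lam a z = mu * z + lam * ln (a * Phi0 (a / lam * (1 - z))).
Proof.
  intros Hl Ha. unfold fH, Phi0.
  destruct (Req_EM_T z 1) as [E|E]; destruct (Req_EM_T (a / lam * (1 - z)) 0) as [E2|E2].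
  - subst. rewrite Rmult_1_r, Rmult_1_r. reflexivity.
  - exfalso. apply E2. subst. ring.
  - exfalso. assert (a/lam <> 0) by (apply Rgt_not_eq, Rdiv_lt_0_compat; auto).
    apply Rmult_integral in E2. destruct E2; [auto| apply E; lra].
  - f_equal. f_equal. f_equal. field. split; [lra|]. split; [|lra].
    intro H. apply E2. rewrite H. ring.
Qed.

Lemma fH_ex_derive (mu lam a z : R) : 0 < lam -> 0 < a -> ex_derive (fH mu lam a) z.
Proof.
  intros Hl Ha.
  apply (ex_derive_ext (fun z => mu * z + lam * ln (a * Phi0 (a / lam * (1 - z))))).
  { intros t. symmetry. apply fH_repr; auto. }
  apply (ex_derive_plus (fun z => mu * z) (fun z => lam * ln (a * Phi0 (a / lam * (1 - z))))).
  - apply ex_derive_scal. apply ex_derive_id.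
  - apply ex_derive_scal.
    apply (ex_derive_comp ln (fun z => a * Phi0 (a / lam * (1 - z)))).
    + eexists. apply is_derive_ln. apply Rmult_lt_0_compat; auto. apply Phi0_pos.
    + apply ex_derive_scal.
      apply (ex_derive_comp Phi0 (fun z => a / lam * (1 - z))).
      * apply Phi0_ex_derive.
      * apply ex_derive_scal. apply (ex_derive_minus (fun _ => 1) (fun z => z)). apply ex_derive_const. apply ex_derive_id.
Qed.

Lemma ln_le' (x y : R) : 0 < x -> x <= y -> ln x <= ln y.
Proof. intros H [H1|H1]. left; apply ln_increasing; auto. subst; lra. Qed.

Lemma ln_le_sub1 (y : R) : 0 < y -> ln y <= y - 1.
Proof. intros H. pose proof (exp_ineq1_le (ln y)). rewrite exp_ln in H0 by auto. lra. Qed.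

Lemma assumA_facts (mu sigma c a lam : R) : assumptionA mu sigma c a lam ->
  0 < sigma /\ 0 < c /\ 0 < a /\ 0 < lam /\ 1 < a /\ 2*mu < a /\ c < mu /\ sigma^2/2 < mu.
Proof.
  intros [H1 [H2 [H3 [H4 [H5 H6]]]]].
  pose proof (Rmax_l 1 (2*mu)). pose proof (Rmax_r 1 (2*mu)).
  pose proof (Rmax_l c (sigma^2/2)). pose proof (Rmax_r c (sigma^2/2)).
  repeat split; lra.
Qed.

Lemma fH_up (mu lam a : R) : 0 < lam -> 0 < a -> 0 < mu ->
  forall z, 0 <= z -> fH mu lam a z <= mu * z + (lam * ln a + a).
Proof.
  intros Hl Ha Hm z Hz. rewrite fH_repr by auto.
  destruct (Phi0_mvt (a / lam * (1 - z))) as [xi [Hxi E]].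
  assert (Hb: 0 < a/lam) by (apply Rdiv_lt_0_compat; auto).
  assert (xi <= a/lam).
  { eapply Rle_trans. apply Hxi. apply Rmax_lub. lra. assert (a/lam*(1-z) = a/lam - a/lam*z) by ring. nra. }
  rewrite E.
  assert (ln (a * exp xi) <= ln a + a/lam).
  { rewrite ln_mult, ln_exp by (auto; apply exp_pos). lra. }
  assert (lam * ln (a * exp xi) <= lam * (ln a + a/lam)) by (apply Rmult_le_compat_l; lra).
  replace (lam * (ln a + a/lam)) with (lam * ln a + a) in H1 by (field; lra). lra.
Qed.

Lemma fH_low (mu lam a : R) : 0 < lam -> 0 < a -> 0 < mu ->
  exists m0, forall z, 0 <= z -> m0 <= fH mu lam a z.
Proof.
  intros Hl Ha Hm.
  set (b := a/lam). assert (Hb: 0 < b) by (apply Rdiv_lt_0_compat; auto).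
  assert (Hlb: lam * b = a) by (unfold b; field; lra).
  set (k := mu/lam). assert (Hk: 0 < k) by (apply Rdiv_lt_0_compat; auto).
  assert (Hkl: lam * k = mu) by (unfold k; field; lra).
  assert (He: exp (-b) < 1) by (rewrite <- exp_0; apply exp_increasing; lra).
  set (C' := lam * ln (lam * (1 - exp (-b))) + lam + lam * ln k).
  exists (Rmin (lam * ln a - a) (C' + mu)).
  intros z Hz. rewrite fH_repr by auto. fold b.
  destruct (Rle_lt_dec z 2) as [Hz2|Hz2].
  - eapply Rle_trans. apply Rmin_l.
    destruct (Phi0_mvt (b * (1 - z))) as [xi [Hxi E]]. rewrite E.
    assert (-b <= xi).
    { eapply Rle_trans. 2: apply Hxi. apply Rmin_glb. lra. nra. }
    rewrite ln_mult, ln_exp by (auto; apply exp_pos).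
    assert (lam * xi >= - a) by nra. nra.
  - eapply Rle_trans. apply Rmin_r.
    unfold Phi0. destruct (Req_EM_T (b * (1 - z)) 0) as [E|E]. { exfalso. nra. }
    set (w := b * (1 - z)) in *.
    assert (Hw: w < -b) by (unfold w; nra).
    assert (exp w <= exp (-b)) by (apply exp_le; lra).
    assert (Hpos: 0 < lam * (1 - exp (-b)) / (z - 1)) by (apply Rdiv_lt_0_compat; [apply Rmult_lt_0_compat|]; lra).
    assert (Hge: lam * (1 - exp (-b)) / (z - 1) <= a * ((exp w - 1) / w)).
    { replace (a * ((exp w - 1) / w)) with (lam * (1 - exp w) / (z - 1)).
      2:{ unfold w. rewrite <- Hlb. field. split; [lra|]. split; lra. }
      unfold Rdiv. apply Rmult_le_compat_r. left; apply Rinv_0_lt_compat; lra.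
      apply Rmult_le_compat_l; lra. }
    assert (L1: ln (lam * (1 - exp (-b)) / (z - 1)) <= ln (a * ((exp w - 1) / w))) by (apply ln_le'; auto).
    unfold Rdiv at 1 in L1. rewrite ln_mult in L1 by (try apply Rmult_lt_0_compat; try apply Rinv_0_lt_compat; lra).
    rewrite ln_Rinv in L1 by lra.
    assert (L2: ln k + ln (z - 1) <= k * (z - 1) - 1).
    { rewrite <- ln_mult by lra. apply ln_le_sub1. nra. }
    assert (lam * ln (lam * (1 - exp (-b))) - lam * ln (z-1) <= lam * ln (a * ((exp w - 1) / w))) by nra.
    unfold C'. nra.
Qed.

Lemma fH_0_pos (mu lam a : R) : 0 < lam -> 1 < a -> 0 < fH mu lam a 0.
Proof.
  intros Hl Ha. rewrite fH_repr by lra.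
  destruct (Phi0_mvt (a / lam * (1 - 0))) as [xi [Hxi E]]. rewrite E.
  assert (Hb: 0 < a/lam) by (apply Rdiv_lt_0_compat; lra).
  assert (0 <= xi) by (eapply Rle_trans; [|apply Hxi]; apply Rmin_glb; lra).
  assert (1 <= exp xi) by (rewrite <- exp_0; apply exp_le; lra).
  assert (ln 1 < ln (a * exp xi)) by (apply ln_increasing; nra).
  rewrite ln_1 in H1. nra.
Qed.


Lemma cont_pt_intro (f : R -> R) x :
  (forall eps, 0 < eps -> exists d, 0 < d /\ forall y, Rabs (y - x) < d -> Rabs (f y - f x) < eps) ->
  continuity_pt f x.
Proof.
  intros H eps He. destruct (H eps He) as [d [Hd H1]]. exists d. split. lra.
  intros y [_ Hy]. simpl in *. unfold R_dist in *. apply H1. exact Hy.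
Qed.

Lemma cont_pt_elim (f : R -> R) x : continuity_pt f x ->
  forall eps, 0 < eps -> exists d, 0 < d /\ forall y, Rabs (y - x) < d -> Rabs (f y - f x) < eps.
Proof.
  intros H eps He. destruct (H eps He) as [d [Hd H1]]. exists d. split. lra.
  intros y Hy. destruct (Req_dec y x) as [E|E]. subst. rewrite Rminus_diag, Rabs_R0. lra.
  apply (H1 y). split. split. exact I. auto. exact Hy.
Qed.

Definition Hyp (mu sigma c a lam : R) (v : R -> R) :=
  assumptionA mu sigma c a lam /\ visc_sol mu sigma c a lam v /\ classL v.

Lemma v_basic mu sigma c a lam v : Hyp mu sigma c a lam v ->
  v 0 = 0 /\ (forall x y, 0 <= x -> x <= y -> v x <= v y) /\
  exists M, 0 <= M /\ forall y, 0 <= y -> 0 <= v y <= M /\ Rabs (v y) <= M.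
Proof.
  intros [_ [[_ [[_ [H0 _]] _]] [Hm [M HM]]]].
  split; auto. split; auto. exists M. split.
  - specialize (HM 0 (Rle_refl _)). pose proof (Rabs_pos (v 0)). lra.
  - intros y Hy. specialize (HM y Hy). split; auto. split.
    rewrite <- H0. apply Hm; lra. apply abs_le_inv in HM. lra.
Qed.

Lemma v_cont mu sigma c a lam v : Hyp mu sigma c a lam v -> forall x, 0 < x -> continuity_pt v x.
Proof.
  intros [_ [[Hc _] _]] x Hx. apply cont_pt_intro. intros eps He.
  destruct (Hc x (Rlt_le _ _ Hx) eps He) as [d [Hd H]].
  exists (Rmin d x). split. apply Rmin_pos; lra.
  intros y Hy. apply H.
  - assert (Rmin d x <= x) by apply Rmin_r. pose proof (Rle_abs (-(y-x))). rewrite Rabs_Ropp in H1. lra.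
  - eapply Rlt_le_trans. exact Hy. apply Rmin_l.
Qed.

Lemma slope_below_nonneg (v : R -> R) al be x p q :
  (forall x y, 0 <= x -> x <= y -> v x <= v y) -> 0 <= al -> al < x < be ->
  (forall y, al <= y <= be -> v x + p*(y-x) + q/2*(y-x)^2 <= v y) -> 0 <= p.
Proof.
  intros Hm Hal Hx Ht.
  assert (-p <= 0).
  { apply (le_of_small _ (-q/2) (x - al)). lra. intros h Hh.
    specialize (Ht (x - h) ltac:(lra)). assert (v (x-h) <= v x) by (apply Hm; lra).
    replace (x - h - x) with (-h) in Ht by ring. nra. }
  lra.
Qed.

Lemma slope_above_nonneg (v : R -> R) al be x p q :
  (forall x y, 0 <= x -> x <= y -> v x <= v y) -> 0 <= al -> al < x < be ->
  (forall y, al <= y <= be -> v y <= v x + p*(y-x) + q/2*(y-x)^2) -> 0 <= p.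
Proof.
  intros Hm Hal Hx Ht.
  assert (-p <= 0).
  { apply (le_of_small _ (q/2) (be - x)). lra. intros h Hh.
    specialize (Ht (x + h) ltac:(lra)). assert (v x <= v (x+h)) by (apply Hm; lra).
    replace (x + h - x) with h in Ht by ring. nra. }
  lra.
Qed.

Lemma semiconcave mu sigma c a lam v : Hyp mu sigma c a lam v ->
  exists k1, 0 <= k1 /\ forall al be x p q, 0 < al -> al < x < be ->
    (forall y, al <= y <= be -> v x + p*(y-x) + q/2*(y-x)^2 <= v y) -> q <= k1.
Proof.
  intros HH. pose proof HH as [HA [[_ [_ Hsup]] _]].
  destruct (assumA_facts _ _ _ _ _ HA) as [Hs [Hc [Ha [Hl [Ha1 [Hma [Hcm Hsm]]]]]]].
  destruct (v_basic _ _ _ _ _ _ HH) as [H0 [Hm [M [HM0 HM]]]].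
  destruct (fH_low mu lam a Hl ltac:(lra) ltac:(lra)) as [m0 Hm0].
  set (S := 1/2*sigma^2). assert (HS: 0 < S) by (unfold S; nra).
  exists (Rmax 0 ((c*M - m0)/S)). split. apply Rmax_l.
  intros al be x p q Hal Hx Ht.
  assert (Hp := slope_below_nonneg v al be x p q Hm ltac:(lra) Hx Ht).
  assert (T := test_below mu sigma c a lam v M x al be p q Hsup ltac:(intros; apply HM; auto) Hal Hx Ht).
  specialize (Hm0 p Hp). destruct (HM x ltac:(lra)) as [[Hv0 HvM] _].
  eapply Rle_trans. 2: apply Rmax_r.
  apply Rmult_le_reg_l with S. auto. replace (S * ((c * M - m0) / S)) with (c*M - m0) by (field; lra).
  fold S in T. nra.
Qed.

Lemma semiconvex mu sigma c a lam v : Hyp mu sigma c a lam v ->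
  forall a0 b0, 0 < a0 -> a0 < b0 ->
  exists k2, 0 <= k2 /\ forall al be x p q, a0 <= al -> be <= b0 -> al < x < be ->
    (forall y, al <= y <= be -> v y <= v x + p*(y-x) + q/2*(y-x)^2) -> -k2 <= q.
Proof.
  intros HH a0 b0 Ha0 Hab. pose proof HH as [HA [[_ [Hsub _]] _]].
  destruct (assumA_facts _ _ _ _ _ HA) as [Hs [Hc [Ha [Hl [Ha1 [Hma [Hcm Hsm]]]]]]].
  destruct (v_basic _ _ _ _ _ _ HH) as [H0 [Hm [M [HM0 HM]]]].
  destruct (semiconcave _ _ _ _ _ _ HH) as [k1 [Hk1 SC]].
  set (S := 1/2*sigma^2). assert (HS: 0 < S) by (unfold S; nra).
  set (P := 2*M/a0 + k1*b0/2).
  set (A0 := lam * ln a + a).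
  exists (Rmax 0 ((mu*P + A0)/S)). split. apply Rmax_l.
  intros al be x p q Hal Hbe Hx Ht.
  assert (Hp := slope_above_nonneg v al be x p q Hm ltac:(lra) Hx Ht).
  assert (HpP: p <= P).
  { assert (p - P <= 0).
    { apply (le_of_small _ (q/2) (x - al)). lra. intros h Hh.
      pose proof (Ht (x - h) ltac:(lra)) as T1. replace (x - h - x) with (-h) in T1 by ring.
      set (a1 := a0/2). assert (Ea1: a1 = a0/2) by reflexivity. clearbody a1.
      assert (Ha1x: a1 < x) by (rewrite Ea1; lra).
      assert (CL0 := chord_lower v a1 x k1 Ha1x).
      assert (CL1: forall t, a1 <= t <= x -> continuity_pt v t).
      { intros t Ht'. apply (v_cont _ _ _ _ _ _ HH). rewrite Ea1 in Ht'. lra. }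
      assert (CL2: forall x0 p0 q0, a1 < x0 < x ->
        (forall y, a1 <= y <= x -> v x0 + p0*(y-x0) + q0/2*(y-x0)^2 <= v y) -> q0 <= k1).
      { intros x0 p0 q0 Hx0 Hy. apply (SC a1 x x0 p0 q0); auto. rewrite Ea1; lra. }
      assert (CL := CL0 CL1 CL2 (x - h) ltac:(rewrite Ea1; lra)).
      set (D := v x - v a1) in *.
      assert (HD: 0 <= D <= M).
      { unfold D. assert (v a1 <= v x) by (apply Hm; rewrite Ea1; lra).
        destruct (HM x ltac:(lra)) as [[_ ?] _]. destruct (HM a1 ltac:(rewrite Ea1; lra)) as [[? _] _]. lra. }
      assert (E: v x - v (x - h) <= D * h / (x - a1) + k1/2*(x - h - a1)*h).
      { assert (v x - (v a1 + D * (x - h - a1) / (x - a1)) = D * h / (x - a1)).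
        { unfold D. field. rewrite Ea1; lra. }
        replace (x - (x - h)) with h in CL by ring. lra. }
      assert (D * h / (x - a1) <= 2*M/a0 * h).
      { unfold Rdiv. rewrite Rmult_assoc.
        assert (x - a1 >= a0/2) by (rewrite Ea1; lra).
        assert (/ (x - a1) <= 2 / a0).
        { apply Rmult_le_reg_l with (x - a1). rewrite Ea1; lra. rewrite Rinv_r by (rewrite Ea1; lra).
          apply Rmult_le_reg_l with a0. lra. field_simplify; lra. }
        assert (h * / (x - a1) <= h * (2/a0)) by (apply Rmult_le_compat_l; lra).
        replace (2 * M * / a0 * h) with (M * (h * (2/a0))) by (field; lra).
        apply Rmult_le_compat. lra. apply Rmult_le_pos; [lra| left; apply Rinv_0_lt_compat; rewrite Ea1; lra]. lra. lra. }
      assert (k1/2*(x - h - a1)*h <= k1*b0/2*h).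
      { rewrite Ea1. assert (x - h - a0/2 <= b0) by lra. assert (0 <= x - h - a0/2) by lra.
        assert (k1*h*(x-h-a0/2) <= k1*h*b0) by (apply Rmult_le_compat_l; [apply Rmult_le_pos|]; lra). lra. }
      assert (Hm1: (p - P - q/2*h) * h <= 0).
      { replace ((p - P - q/2*h) * h) with (p*h - (2*M/a0*h + k1*b0/2*h) - q/2*h^2) by (unfold P; field; lra).
        replace ((-h)^2) with (h^2) in T1 by ring. lra. }
      assert (p - P - q/2*h <= 0).
      { destruct (Rle_lt_dec (p - P - q/2*h) 0); auto. exfalso. assert (0 < (p - P - q/2*h) * h) by (apply Rmult_lt_0_compat; lra). lra. }
      lra. }
    lra. }
  assert (T := test_above mu sigma c a lam v M x al be p q Hsub ltac:(intros; apply HM; auto) ltac:(lra) Hx Ht).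
  pose proof (fH_up mu lam a Hl ltac:(lra) ltac:(lra) p Hp) as Fu. fold A0 in Fu.
  destruct (HM x ltac:(lra)) as [[Hv0 HvM] _].
  assert (S * q >= - (mu * P + A0)) by (fold S in T; nra).
  assert (- ((mu * P + A0) / S) <= q).
  { apply Rmult_le_reg_l with S. auto. replace (S * - ((mu * P + A0) / S)) with (-(mu*P + A0)) by (field; lra). lra. }
  pose proof (Rmax_r 0 ((mu * P + A0) / S)). lra.
Qed.

Lemma v_window mu sigma c a lam v : Hyp mu sigma c a lam v ->
  forall a0 b0, 0 < a0 -> a0 < b0 ->
  exists k, 0 <= k /\
  (forall al t be, a0 <= al -> al < t -> t < be -> be <= b0 ->
     Rabs (v t - (v al + (v be - v al)*(t-al)/(be-al))) <= k/2*(t-al)*(be-t)).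
Proof.
  intros HH a0 b0 Ha0 Hab.
  destruct (semiconcave _ _ _ _ _ _ HH) as [k1 [Hk1 SC]].
  destruct (semiconvex _ _ _ _ _ _ HH a0 b0 Ha0 Hab) as [k2 [Hk2 SV]].
  exists (Rmax k1 k2). split. eapply Rle_trans. exact Hk1. apply Rmax_l.
  apply chord_both.
  - intros; apply (v_cont _ _ _ _ _ _ HH); lra.
  - intros al be x p q H1 H2 H3 H4. eapply Rle_trans. apply (SC al be x p q); auto. lra. apply Rmax_l.
  - intros al be x p q H1 H2 H3 H4. pose proof (Rmax_r k1 k2). pose proof (SV al be x p q H1 H2 H3 H4). lra.
Qed.

Lemma touch_below (u : R -> R) x D K r r' p q : 0 < r -> 0 < r' ->
  (forall y, 0 < Rabs (y - x) < r -> Rabs (slope u x y - D) <= K * Rabs (y - x)) ->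
  (forall y, Rabs (y - x) < r' -> u x + p*(y-x) + q/2*(y-x)^2 <= u y) -> p = D.
Proof.
  intros Hr Hr' HB Ht.
  set (r2 := Rmin r r'). assert (Hr2: 0 < r2) by (unfold r2; apply Rmin_pos; lra).
  assert (Hr2a: r2 <= r) by apply Rmin_l. assert (Hr2b: r2 <= r') by apply Rmin_r.
  assert (A: p - D <= 0).
  { apply (le_of_small _ (K - q/2) r2 Hr2). intros h Hh.
    assert (Hy: Rabs (x + h - x) = h) by (replace (x+h-x) with h by ring; apply Rabs_right; lra).
    specialize (HB (x+h) ltac:(rewrite Hy; lra)). specialize (Ht (x+h) ltac:(rewrite Hy; lra)).
    rewrite Hy in HB. apply abs_le_inv in HB.
    assert (Es: slope u x (x+h) * h = u (x+h) - u x) by (unfold slope; field; lra).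
    replace (x + h - x) with h in Ht by ring.
    assert ((D + K*h) * h >= p*h + q/2*h^2) by nra.
    apply Rmult_le_reg_r with h. lra. nra. }
  assert (B: D - p <= 0).
  { apply (le_of_small _ (K - q/2) r2 Hr2). intros h Hh.
    assert (Hy: Rabs (x - h - x) = h) by (replace (x-h-x) with (-h) by ring; rewrite Rabs_Ropp; apply Rabs_right; lra).
    specialize (HB (x-h) ltac:(rewrite Hy; lra)). specialize (Ht (x-h) ltac:(rewrite Hy; lra)).
    rewrite Hy in HB. apply abs_le_inv in HB.
    assert (Es: slope u x (x-h) * h = u x - u (x-h)) by (unfold slope; field; lra).
    replace (x - h - x) with (-h) in Ht by ring.
    assert ((D - K*h) * h <= p*h - q/2*h^2) by nra.
    apply Rmult_le_reg_r with h. lra. nra. }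
  lra.
Qed.

Lemma touch_above (u : R -> R) x D K r r' p q : 0 < r -> 0 < r' ->
  (forall y, 0 < Rabs (y - x) < r -> Rabs (slope u x y - D) <= K * Rabs (y - x)) ->
  (forall y, Rabs (y - x) < r' -> u y <= u x + p*(y-x) + q/2*(y-x)^2) -> p = D.
Proof.
  intros Hr Hr' HB Ht.
  assert (-p = -D).
  { apply (touch_below (fun y => - u y) x (-D) K r r' (-p) (-q) Hr Hr').
    - intros y Hy. specialize (HB y Hy). unfold slope in *.
      replace ((- u y - - u x) / (y - x) - - D) with (-((u y - u x) / (y - x) - D)) by (field; intro E; rewrite E, Rabs_R0 in Hy; lra).
      rewrite Rabs_Ropp. auto.
    - intros y Hy. specialize (Ht y Hy). lra. }
  lra.
Qed.

Lemma v_deriv_info mu sigma c a lam v : Hyp mu sigma c a lam v ->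
  forall x, 0 < x -> exists K, 0 <= K /\
   (forall z, x/2 < z < x + 1 -> is_derive v z (Derive v z) /\
      forall y, x/2 <= y <= x+1 -> y <> z -> Rabs (slope v z y - Derive v z) <= K * Rabs (y - z)) /\
   (forall y z, x/2 < y < x + 1 -> x/2 < z < x+1 -> Rabs (Derive v y - Derive v z) <= 2*K * Rabs (y - z)).
Proof.
  intros HH x Hx.
  destruct (v_window _ _ _ _ _ _ HH (x/2) (x+1) ltac:(lra) ltac:(lra)) as [k [Hk W]].
  exists (k/2). split. lra. split.
  - intros z Hz. apply (two_sided v (x/2) (x+1) k Hk W z Hz).
  - intros y z Hy Hz. replace (2 * (k/2)) with k by field. apply (two_sided_lip v (x/2) (x+1) k Hk W y z Hy Hz).
Qed.

Lemma v_local mu sigma c a lam v : Hyp mu sigma c a lam v -> forall x, 0 < x ->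
  is_derive v x (Derive v x) /\ 0 <= Derive v x /\ continuity_pt (Derive v) x.
Proof.
  intros HH x Hx.
  destruct (v_basic _ _ _ _ _ _ HH) as [H0 [Hm [M [HM0 HM]]]].
  destruct (v_deriv_info _ _ _ _ _ _ HH x Hx) as [K [HK [W1 W2]]].
  destruct (W1 x ltac:(lra)) as [Hd Hq].
  split; [exact Hd|]. split.
  - assert (- Derive v x <= 0).
    { apply (le_of_small _ K (Rmin (x/2) 1)). apply Rmin_pos; lra. intros h Hh.
      pose proof (Rmin_l (x/2) 1). pose proof (Rmin_r (x/2) 1).
      specialize (Hq (x+h) ltac:(lra) ltac:(intro; lra)).
      replace (x + h - x) with h in Hq by ring. rewrite (Rabs_right h) in Hq by lra.
      apply abs_le_inv in Hq.
      assert (0 <= slope v x (x+h)).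
      { unfold slope. replace (x + h - x) with h by ring. apply Rdiv_le_0_compat. assert (v x <= v (x+h)) by (apply Hm; lra). lra. lra. }
      lra. }
    lra.
  - apply cont_pt_intro. intros eps He.
    exists (Rmin (Rmin (x/2) 1) (eps / (2*K+1))). split. apply Rmin_pos; try (apply Rmin_pos; lra). apply Rdiv_lt_0_compat; lra.
    intros y Hy.
    assert (Hy1: Rabs (y - x) < Rmin (x/2) 1) by (eapply Rlt_le_trans; [exact Hy| apply Rmin_l]).
    pose proof (Rmin_l (x/2) 1). pose proof (Rmin_r (x/2) 1).
    assert (Hy2: Rabs (y - x) < eps / (2*K+1)) by (eapply Rlt_le_trans; [exact Hy| apply Rmin_r]).
    pose proof (Rle_abs (y-x)) as A1. pose proof (Rle_abs (-(y-x))) as A2. rewrite Rabs_Ropp in A2.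
    specialize (W2 y x ltac:(lra) ltac:(lra)).
    assert (2*K*Rabs (y-x) <= (2*K+1) * Rabs (y-x)) by (pose proof (Rabs_pos (y-x)); nra).
    assert ((2*K+1) * Rabs (y-x) < eps).
    { apply Rmult_lt_reg_r with (/(2*K+1)). apply Rinv_0_lt_compat; lra.
      replace ((2 * K + 1) * Rabs (y - x) * / (2 * K + 1)) with (Rabs (y-x)) by (field; lra). exact Hy2. }
    lra.
Qed.

Definition gfun (mu sigma c a lam : R) (v : R -> R) (y : R) :=
  (c * v y - fH mu lam a (Derive v y)) / (1/2*sigma^2).

Lemma g_cont mu sigma c a lam v : Hyp mu sigma c a lam v -> forall x, 0 < x ->
  continuity_pt (gfun mu sigma c a lam v) x.
Proof.
  intros HH x Hx. pose proof HH as [HA _].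
  destruct (assumA_facts _ _ _ _ _ HA) as [Hs [Hc [Ha [Hl _]]]].
  unfold gfun. apply continuity_pt_div.
  - apply continuity_pt_minus. apply continuity_pt_scal. apply (v_cont _ _ _ _ _ _ HH); auto.
    apply (continuity_pt_comp (Derive v) (fH mu lam a)).
    apply (v_local _ _ _ _ _ _ HH x Hx).
    apply derive_cont. apply fH_ex_derive; auto.
  - apply continuity_pt_const. intros ? ?; reflexivity.
  - nra.
Qed.

Lemma v_C2 mu sigma c a lam v : Hyp mu sigma c a lam v -> forall x, 0 < x ->
  is_derive (Derive v) x (gfun mu sigma c a lam v x).
Proof.
  intros HH x Hx. pose proof HH as [HA [[_ [Hsub Hsup]] _]].
  destruct (assumA_facts _ _ _ _ _ HA) as [Hs [Hc [Ha [Hl _]]]].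
  destruct (v_basic _ _ _ _ _ _ HH) as [H0 [Hm [M [HM0 HM]]]].
  assert (HMa: forall y, 0 <= y -> Rabs (v y) <= M) by (intros; apply HM; auto).
  destruct (v_deriv_info _ _ _ _ _ _ HH x Hx) as [K [HK [W1 W2]]].
  set (S := 1/2*sigma^2). assert (HS: 0 < S) by (unfold S; nra).
  set (g := gfun mu sigma c a lam v) in *.
  set (gx := g x).
  apply is_derive_Reals. intros eps Heps.
  set (e := eps/2). assert (He: 0 < e) by (unfold e; lra).
  destruct (cont_pt_elim g x (g_cont _ _ _ _ _ _ HH x Hx) e He) as [d0 [Hd0 Hg]].
  set (r0 := Rmin (Rmin (d0/2) (x/4)) (1/2)).
  assert (Hr0: 0 < r0) by (unfold r0; repeat apply Rmin_pos; lra).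
  assert (R1: r0 <= d0/2) by (unfold r0; eapply Rle_trans; [apply Rmin_l| apply Rmin_l]).
  assert (R2: r0 <= x/4) by (unfold r0; eapply Rle_trans; [apply Rmin_l| apply Rmin_r]).
  assert (R3: r0 <= 1/2) by (unfold r0; apply Rmin_r).
  set (u := fun y => v y - gx * y^2/2).
  assert (Tz: forall z, x - r0 <= z <= x + r0 -> exists r, 0 < r /\
      forall y, 0 < Rabs (y - z) < r -> Rabs (slope v z y - Derive v z) <= K * Rabs (y - z)).
  { intros z Hz. exists (Rmin (z - x/2) (x + 1 - z)). split. apply Rmin_pos; lra.
    intros y Hy. pose proof (Rmin_l (z - x/2) (x + 1 - z)). pose proof (Rmin_r (z - x/2) (x + 1 - z)).
    pose proof (Rle_abs (y-z)). pose proof (Rle_abs (-(y-z))). rewrite Rabs_Ropp in H3.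
    apply (proj2 (W1 z ltac:(lra))). lra. intro E. subst. rewrite Rminus_diag, Rabs_R0 in Hy. lra. }
  assert (Gz: forall z, x - r0 <= z <= x + r0 -> Rabs (g z - gx) < e).
  { intros z Hz. apply Hg. assert (Rabs (z-x) <= r0) by (apply Rabs_le; lra). lra. }
  assert (Hch: forall al t be, x - r0 <= al -> al < t -> t < be -> be <= x + r0 ->
     Rabs (u t - (u al + (u be - u al)*(t-al)/(be-al))) <= e/2*(t-al)*(be-t)).
  { apply chord_both.
    - intros t Ht. unfold u. apply continuity_pt_minus. apply (v_cont _ _ _ _ _ _ HH). lra. reg.
    - intros al be z p q Hal Hbe Hz Ht.
      assert (Ht': forall y, al <= y <= be -> v z + (p + gx*z)*(y-z) + (q + gx)/2*(y-z)^2 <= v y).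
      { intros y Hy. specialize (Ht y Hy). unfold u in Ht.
        replace (v z + (p + gx * z) * (y - z) + (q + gx) / 2 * (y - z) ^ 2) with
          (v z - gx * z ^ 2 / 2 + p * (y - z) + q / 2 * (y - z) ^ 2 + gx * y^2/2) by field. lra. }
      destruct (Tz z ltac:(lra)) as [rz [Hrz Qz]].
      assert (Ep: p + gx * z = Derive v z).
      { apply (touch_below v z (Derive v z) K rz (Rmin (z - al) (be - z)) (p + gx*z) (q + gx) Hrz).
        apply Rmin_pos; lra. exact Qz.
        intros y Hy. apply Ht'. pose proof (Rmin_l (z - al) (be - z)). pose proof (Rmin_r (z - al) (be - z)).
        pose proof (Rle_abs (y-z)). pose proof (Rle_abs (-(y-z))). rewrite Rabs_Ropp in H3. lra. }
      pose proof (test_below mu sigma c a lam v M z al be _ _ Hsup HMa ltac:(lra) Hz Ht') as T.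
      rewrite Ep in T. fold S in T.
      specialize (Gz z ltac:(lra)). apply Rabs_def2 in Gz.
      assert (Eg: S * g z = c * v z - fH mu lam a (Derive v z)) by (unfold g, gfun; fold S; field; lra).
      assert (S * q <= S * (e/2)*2) by nra.
      nra.
    - intros al be z p q Hal Hbe Hz Ht.
      assert (Ht': forall y, al <= y <= be -> v y <= v z + (p + gx*z)*(y-z) + (q + gx)/2*(y-z)^2).
      { intros y Hy. specialize (Ht y Hy). unfold u in Ht.
        replace (v z + (p + gx * z) * (y - z) + (q + gx) / 2 * (y - z) ^ 2) with
          (v z - gx * z ^ 2 / 2 + p * (y - z) + q / 2 * (y - z) ^ 2 + gx * y^2/2) by field. lra. }
      destruct (Tz z ltac:(lra)) as [rz [Hrz Qz]].
      assert (Ep: p + gx * z = Derive v z).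
      { apply (touch_above v z (Derive v z) K rz (Rmin (z - al) (be - z)) (p + gx*z) (q + gx) Hrz).
        apply Rmin_pos; lra. exact Qz.
        intros y Hy. apply Ht'. pose proof (Rmin_l (z - al) (be - z)). pose proof (Rmin_r (z - al) (be - z)).
        pose proof (Rle_abs (y-z)). pose proof (Rle_abs (-(y-z))). rewrite Rabs_Ropp in H3. lra. }
      pose proof (test_above mu sigma c a lam v M z al be _ _ Hsub HMa ltac:(lra) Hz Ht') as T.
      rewrite Ep in T. fold S in T.
      specialize (Gz z ltac:(lra)). apply Rabs_def2 in Gz.
      assert (Eg: S * g z = c * v z - fH mu lam a (Derive v z)) by (unfold g, gfun; fold S; field; lra).
      nra. }
  assert (Du: forall y, x - r0 < y < x + r0 -> Derive u y = Derive v y - gx * y).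
  { intros y Hy. apply is_derive_unique. unfold u.
    apply (is_derive_minus v (fun y => gx * y^2/2)). apply (v_local _ _ _ _ _ _ HH y). lra.
    auto_derive. auto. field. }
  assert (Lu := two_sided_lip u (x - r0) (x + r0) e ltac:(lra) Hch).
  exists (mkposreal r0 Hr0). intros h Hh0 Hh. simpl in Hh.
  pose proof (Rle_abs h). pose proof (Rle_abs (-h)). rewrite Rabs_Ropp in H1.
  specialize (Lu (x+h) x ltac:(lra) ltac:(lra)).
  rewrite Du in Lu by lra. rewrite Du in Lu by lra.
  replace (x + h - x) with h in Lu by ring.
  replace ((Derive v (x + h) - Derive v x) / h - gx) with ((Derive v (x + h) - gx * (x + h) - (Derive v x - gx * x)) / h) by (field; auto).
  unfold Rdiv. rewrite Rabs_mult, Rabs_inv.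
  assert (0 < Rabs h) by (apply Rabs_pos_lt; auto).
  apply Rle_lt_trans with (e * Rabs h * / Rabs h).
  apply Rmult_le_compat_r. left; apply Rinv_0_lt_compat; auto. exact Lu.
  replace (e * Rabs h * / Rabs h) with e by (field; lra). unfold e. lra.
Qed.

Lemma sup_exists (P : R -> Prop) (f : R -> R) : (exists x, P x) -> (exists B, forall x, P x -> f x <= B) ->
  exists L, (forall x, P x -> f x <= L) /\ forall eps, 0 < eps -> exists x, P x /\ L - eps < f x.
Proof.
  intros [x0 Hx0] [B HB].
  destruct (completeness (fun y => exists x, P x /\ y = f x)) as [L [HL1 HL2]].
  { exists B. intros y [x [Hx E]]. subst. auto. }
  { exists (f x0). exists x0. auto. }
  exists L. split.
  - intros x Hx. apply HL1. exists x. auto.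
  - intros eps He. destruct (classic (exists x, P x /\ L - eps < f x)) as [H|H]; auto.
    exfalso. assert (L <= L - eps).
    { apply HL2. intros y [x [Hx E]]. subst. destruct (Rle_lt_dec (f x) (L - eps)); auto. exfalso. apply H. exists x. auto. }
    lra.
Qed.

Lemma mvt_pos (f df : R -> R) (a b : R) : 0 < a -> a < b ->
  (forall x, 0 < x -> is_derive f x (df x)) ->
  exists xi, a <= xi <= b /\ f b - f a = df xi * (b - a).
Proof.
  intros Ha Hab Hd.
  destruct (MVT_gen f a b df) as [xi [Hxi E]].
  { intros x Hx. apply Hd. rewrite Rmin_left in Hx by lra. lra. }
  { intros x Hx. apply derive_cont. eexists. apply Hd. rewrite Rmin_left in Hx by lra. lra. }
  rewrite Rmin_left, Rmax_right in Hxi by lra. exists xi. auto.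
Qed.

Lemma deriv_pos_left (f : R -> R) x d : is_derive f x d -> 0 < d ->
  exists del, 0 < del /\ forall t, x - del < t < x -> f t < f x.
Proof.
  intros H Hd. apply is_derive_Reals in H. destruct (H (d/2) ltac:(lra)) as [del Hdel].
  exists del. split. apply cond_pos. intros t Ht.
  specialize (Hdel (t - x) ltac:(lra)).
  assert (Rabs (t - x) < del) by (rewrite Rabs_left by lra; lra).
  specialize (Hdel H0). replace (x + (t - x)) with t in Hdel by ring.
  apply Rabs_def2 in Hdel.
  assert (Hq: (f t - f x) / (t - x) > 0) by lra.
  destruct (Rle_lt_dec (f x) (f t)) as [Hc|Hc]; auto.
  exfalso. assert ((f t - f x) / (t - x) <= 0).
  { apply Rmult_le_reg_r with (x - t). lra. replace ((f t - f x) / (t - x) * (x - t)) with (f x - f t) by (field; lra). lra. }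
  lra.
Qed.

Lemma g_concave mu sigma c a lam v : Hyp mu sigma c a lam v ->
  forall x0, 0 < x0 -> gfun mu sigma c a lam v x0 <= 0.
Proof.
  intros HH x0 Hx0. pose proof HH as [HA _].
  destruct (assumA_facts _ _ _ _ _ HA) as [Hs [Hc [Ha [Hl _]]]].
  destruct (v_basic _ _ _ _ _ _ HH) as [H0 [Hm [M [HM0 HM]]]].
  set (S := 1/2*sigma^2). assert (HS: 0 < S) by (unfold S; nra).
  set (g := gfun mu sigma c a lam v).
  set (Dv := Derive v).
  assert (HDv: forall x, 0 < x -> is_derive v x (Dv x)) by (intros; apply (v_local _ _ _ _ _ _ HH); auto).
  assert (HDv0: forall x, 0 < x -> 0 <= Dv x) by (intros; apply (v_local _ _ _ _ _ _ HH); auto).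
  assert (Hg: forall x, 0 < x -> is_derive Dv x (g x)) by (intros; apply v_C2; auto).
  assert (Hgc: forall x, 0 < x -> continuity_pt g x) by (intros; apply g_cont; auto).
  destruct (Rle_lt_dec (g x0) 0) as [Hle|Hgt]; auto. exfalso.
  assert (StepA: forall t2, x0 <= t2 -> 0 < g t2).
  { intros t2 Ht2. destruct (Rle_lt_dec (g t2) 0) as [Hneg|Hp]; auto. exfalso.
    destruct (sup_exists (fun s => x0 <= s <= t2 /\ g s <= 0) (fun s => - s)) as [L [HL1 HL2]].
    { exists t2. split; auto; lra. }
    { exists (-x0). intros s [Hs' _]. lra. }
    set (z1 := -L).
    assert (Z1: forall s, x0 <= s <= t2 -> g s <= 0 -> z1 <= s) by (intros s H1 H2; specialize (HL1 s (conj H1 H2)); unfold z1; lra).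
    assert (Z2: forall eps, 0 < eps -> exists s, (x0 <= s <= t2 /\ g s <= 0) /\ s < z1 + eps).
    { intros eps He. destruct (HL2 eps He) as [s [Hs1 Hs2]]. exists s. split; auto. unfold z1; lra. }
    assert (Hz1a: x0 <= z1).
    { destruct (Rle_lt_dec x0 z1) as [?|Hq]; auto. exfalso.
      destruct (Z2 (x0 - z1) ltac:(lra)) as [s [[[Hs1 _] _] Hs3]]. lra. }
    assert (Hz1b: z1 <= t2) by (apply Z1; auto; lra).
    assert (Gpos: forall s, x0 <= s < z1 -> 0 < g s).
    { intros s Hs'. destruct (Rle_lt_dec (g s) 0) as [Hq|Hq]; auto. exfalso. specialize (Z1 s ltac:(lra) Hq). lra. }
    assert (Gz1le: g z1 <= 0).
    { destruct (Rle_lt_dec (g z1) 0) as [Hq|Hq]; auto. exfalso.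
      destruct (cont_pt_elim g z1 (Hgc z1 ltac:(lra)) (g z1) Hq) as [d [Hd Hd']].
      destruct (Z2 d Hd) as [s [[Hs1 Hs2] Hs3]]. specialize (Z1 s Hs1 Hs2).
      assert (Rabs (s - z1) < d) by (rewrite Rabs_right; lra).
      specialize (Hd' s H). apply Rabs_def2 in Hd'. lra. }
    assert (Hz1c: x0 < z1) by (destruct (Req_dec x0 z1) as [E|E]; [rewrite <- E in Gz1le; lra| lra]).
    assert (Gz1: g z1 = 0).
    { destruct (Rle_lt_dec 0 (g z1)) as [Hq|Hq]; [lra|]. exfalso.
      destruct (cont_pt_elim g z1 (Hgc z1 ltac:(lra)) (- g z1) ltac:(lra)) as [d [Hd Hd']].
      set (s := Rmax x0 (z1 - d/2)).
      assert (Hs1: x0 <= s) by apply Rmax_l. assert (Hs2: z1 - d/2 <= s) by apply Rmax_r.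
      assert (Hs3: s < z1) by (unfold s; apply Rmax_lub_lt; lra).
      specialize (Hd' s ltac:(rewrite Rabs_left; lra)). apply Rabs_def2 in Hd'.
      specialize (Gpos s ltac:(lra)). lra. }
    set (m := (x0 + z1)/2).
    assert (Dm: Dv x0 < Dv m).
    { destruct (mvt_pos Dv g x0 m Hx0 ltac:(unfold m; lra) Hg) as [xi [Hxi E]].
      assert (0 < g xi) by (apply Gpos; unfold m in *; lra).
      assert (0 < g xi * (m - x0)) by (apply Rmult_lt_0_compat; unfold m; lra). lra. }
    assert (Dz: Dv m <= Dv z1).
    { destruct (mvt_pos Dv g m z1 ltac:(unfold m; lra) ltac:(unfold m; lra) Hg) as [xi [Hxi E]].
      assert (0 <= g xi).
      { destruct (Req_dec xi z1) as [Ex|Ex]. rewrite Ex, Gz1. lra. left. apply Gpos. unfold m in *; lra. }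
      assert (0 <= g xi * (z1 - m)) by (apply Rmult_le_pos; unfold m; lra). lra. }
    assert (Dpos: 0 < Dv z1) by (pose proof (HDv0 x0 Hx0); lra).
    destruct (fH_ex_derive mu lam a (Dv z1) Hl Ha) as [dF HdF].
    assert (Hder: is_derive (fun t => c * v t - fH mu lam a (Dv t)) z1 (c * Dv z1 - g z1 * dF)).
    { apply (is_derive_minus (fun t => c * v t) (fun t => fH mu lam a (Dv t))).
      apply is_derive_scal. apply HDv. lra.
      apply (is_derive_comp (fH mu lam a) Dv). exact HdF. apply Hg. lra. }
    rewrite Gz1 in Hder. replace (c * Dv z1 - 0 * dF) with (c * Dv z1) in Hder by ring.
    destruct (deriv_pos_left _ _ _ Hder ltac:(nra)) as [d [Hd Hd']].
    set (s := Rmax x0 (z1 - d/2)).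
    assert (Hs1: x0 <= s) by apply Rmax_l. assert (Hs2: z1 - d/2 <= s) by apply Rmax_r.
    assert (Hs3: s < z1) by (unfold s; apply Rmax_lub_lt; lra).
    specialize (Hd' s ltac:(lra)). cbv beta in Hd'.
    assert (EH: forall t, c * v t - fH mu lam a (Dv t) = S * g t) by (intros; unfold g, gfun, Dv; fold S; field; lra).
    rewrite !EH, Gz1 in Hd'. specialize (Gpos s ltac:(lra)). nra. }
  assert (D1: Dv x0 < Dv (x0+1)).
  { destruct (mvt_pos Dv g x0 (x0+1) Hx0 ltac:(lra) Hg) as [xi [Hxi E]].
    specialize (StepA xi ltac:(lra)). lra. }
  set (d1 := Dv (x0+1)). assert (Hd1: 0 < d1) by (pose proof (HDv0 x0 Hx0); unfold d1; lra).
  set (T := x0 + 1 + (M+1)/d1).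
  assert (HT: x0 + 1 < T) by (unfold T; assert (0 < (M+1)/d1) by (apply Rdiv_lt_0_compat; lra); lra).
  destruct (mvt_pos v Dv (x0+1) T ltac:(lra) HT HDv) as [xi [Hxi E]].
  assert (d1 <= Dv xi).
  { destruct (Req_dec xi (x0+1)) as [Ex|Ex]. rewrite Ex. unfold d1; lra.
    destruct (mvt_pos Dv g (x0+1) xi ltac:(lra) ltac:(lra) Hg) as [xi2 [Hxi2 E2]].
    specialize (StepA xi2 ltac:(lra)). unfold d1. assert (0 < g xi2 * (xi - (x0+1))) by (apply Rmult_lt_0_compat; lra). lra. }
  assert (E2: (M+1)/d1 * d1 = M + 1) by (field; lra).
  assert (T - (x0+1) = (M+1)/d1) by (unfold T; ring).
  assert (Dv xi * (T - (x0+1)) >= M + 1).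
  { rewrite H1. assert ((M+1)/d1 * d1 <= (M+1)/d1 * Dv xi) by (apply Rmult_le_compat_l; [left; apply Rdiv_lt_0_compat; lra| auto]). lra. }
  destruct (HM T ltac:(lra)) as [[_ HT2] _]. destruct (HM (x0+1) ltac:(lra)) as [[HT3 _] _].
  lra.
Qed.

Lemma Dv_noninc mu sigma c a lam v : Hyp mu sigma c a lam v ->
  forall x y, 0 < x -> x <= y -> Derive v y <= Derive v x.
Proof.
  intros HH x y Hx Hxy. destruct (Req_dec x y) as [E|E]. subst; lra.
  destruct (mvt_pos (Derive v) (gfun mu sigma c a lam v) x y Hx ltac:(lra)) as [xi [Hxi Ex]].
  { intros; apply v_C2; auto. }
  pose proof (g_concave _ _ _ _ _ _ HH xi ltac:(lra)).
  assert (gfun mu sigma c a lam v xi * (y - x) <= 0) by (apply Rmult_le_0_r; lra). lra.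
Qed.

Lemma Dv_bounded mu sigma c a lam v : Hyp mu sigma c a lam v ->
  exists B, forall x, 0 < x -> Derive v x <= B.
Proof.
  intros HH. pose proof HH as [HA _].
  destruct (assumA_facts _ _ _ _ _ HA) as [Hs [Hc [Ha [Hl [Ha1 [Hma [Hcm Hsm]]]]]]].
  destruct (v_basic _ _ _ _ _ _ HH) as [H0 [Hm [M [HM0 HM]]]].
  set (S := 1/2*sigma^2). assert (HS: 0 < S) by (unfold S; nra).
  set (A0 := lam * ln a + a).
  assert (Hlna: 0 < ln a) by (rewrite <- ln_1; apply ln_increasing; lra).
  assert (HA0: 0 < A0) by (unfold A0; nra).
  assert (Hmu: 0 < mu) by lra.
  set (k := mu / S). assert (Hk: 0 < k) by (unfold k; apply Rdiv_lt_0_compat; lra).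
  set (c0 := A0 / mu). assert (Hc0: 0 < c0) by (unfold c0; apply Rdiv_lt_0_compat; lra).
  set (Dv := Derive v).
  assert (HDv0: forall x, 0 < x -> 0 <= Dv x) by (intros; apply (v_local _ _ _ _ _ _ HH); auto).
  exists (exp k * (Dv 1 + c0)).
  assert (Hek: 1 <= exp k) by (rewrite <- exp_0; apply exp_le; lra).
  pose proof (HDv0 1 ltac:(lra)).
  intros x Hx. destruct (Rle_lt_dec 1 x) as [H1|H1].
  - pose proof (Dv_noninc _ _ _ _ _ _ HH 1 x ltac:(lra) H1). fold Dv in H2. nra.
  - set (e := fun t => exp (k * t) * (Dv t + c0)).
    set (de := fun t => k * exp (k * t) * (Dv t + c0) + exp (k * t) * gfun mu sigma c a lam v t).
    assert (Hde: forall t, 0 < t -> is_derive e t (de t)).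
    { intros t Ht. unfold e, de.
      assert (D1: is_derive (fun t => exp (k*t)) t (k * exp (k*t))) by (auto_derive; auto; ring).
      pose proof (is_derive_plus Dv (fun _ => c0) t _ _ (v_C2 _ _ _ _ _ _ HH t Ht) (is_derive_const c0 t)) as D2.
      change (plus (gfun mu sigma c a lam v t) 0) with (gfun mu sigma c a lam v t + 0) in D2.
      rewrite Rplus_0_r in D2.
      pose proof (is_derive_mult (fun t => exp (k*t)) (fun t => plus (Dv t) c0) t _ _ D1 D2 ltac:(intros; apply Rmult_comm)) as D3.
      exact D3. }
    destruct (mvt_pos e de x 1 Hx H1 Hde) as [xi [Hxi E]].
    assert (Hdeg: 0 <= de xi).
    { unfold de. pose proof (exp_pos (k * xi)).
      assert (Hgl: gfun mu sigma c a lam v xi >= - k * (Dv xi + c0)).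
      { unfold gfun. fold S. pose proof (fH_up mu lam a Hl Ha Hmu (Derive v xi) (HDv0 xi ltac:(lra))) as Fu.
        destruct (HM xi ltac:(lra)) as [[Hv0 _] _].
        apply Rle_ge. apply Rmult_le_reg_l with S. auto.
        replace (S * ((c * v xi - fH mu lam a (Derive v xi)) / S)) with (c * v xi - fH mu lam a (Derive v xi)) by (field; lra).
        replace (S * (- k * (Dv xi + c0))) with (-(mu * Dv xi + A0)) by (unfold k, c0, Dv; field; lra).
        unfold Dv, A0 in *. nra. }
      nra. }
    assert (e x <= e 1) by (assert (0 <= de xi * (1 - x)) by (apply Rmult_le_pos; lra); lra).
    unfold e in H2. replace (k * 1) with k in H2 by ring.
    assert (1 <= exp (k * x)) by (rewrite <- exp_0; apply exp_le; nra).
    pose proof (HDv0 x Hx). fold Dv. nra.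
Qed.

Lemma rd_intro (q : R -> R) d0 : (forall eps, 0 < eps -> exists rho, 0 < rho /\ forall t, 0 < t < rho -> Rabs (q t - d0) < eps) ->
  filterlim q (at_right 0) (locally d0).
Proof.
  intros H. apply filterlim_locally. intros eps.
  destruct (H eps (cond_pos eps)) as [rho [Hr Hq]].
  exists (mkposreal rho Hr). intros y Hy Hy0. simpl in Hy.
  unfold ball; simpl. unfold AbsRing_ball, abs, minus, plus, opp; simpl.
  apply Hq. split. auto. unfold ball in Hy; simpl in Hy. unfold AbsRing_ball, abs, minus, plus, opp in Hy; simpl in Hy.
  change (Rabs (y + - 0) < rho) in Hy. rewrite Ropp_0, Rplus_0_r in Hy. rewrite Rabs_right in Hy; lra.
Qed.

Lemma lim_intro (f : R -> R) l : (forall eps, 0 < eps -> exists X, forall x, X < x -> Rabs (f x - l) < eps) -> is_lim f p_infty l.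
Proof.
  intros H. apply is_lim_spec. intros eps. simpl. destruct (H eps (cond_pos eps)) as [X HX]. exists X. auto.
Qed.

Lemma le_of_approx X Y : (forall eps, 0 < eps -> X <= Y + eps) -> X <= Y.
Proof.
  intros H. destruct (Rle_lt_dec X Y) as [H1|H1]; auto. specialize (H ((X - Y)/2) ltac:(lra)). lra.
Qed.

Lemma RD2 (f df : R -> R) d0 :
  (forall x, 0 < x -> is_derive f x (df x)) ->
  (forall eps, 0 < eps -> exists rho, 0 < rho /\ forall t, 0 < t < rho -> Rabs (f t - f 0) < eps) ->
  (forall eps, 0 < eps -> exists rho, 0 < rho /\ forall t, 0 < t < rho -> Rabs (df t - d0) < eps) ->
  filterlim (fun h => (f h - f 0) / h) (at_right 0) (locally d0).
Proof.
  intros Hd Hf Hdf. apply rd_intro. intros eps He.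
  destruct (Hdf (eps/2) ltac:(lra)) as [rho [Hr Hr']].
  exists rho. split; auto. intros h Hh.
  assert (B: Rabs (f h - f 0 - d0 * h) <= eps/2 * h).
  { apply Rabs_le. split.
    - apply le_of_approx. intros e' He'.
      destruct (Hf (e'/2) ltac:(lra)) as [r1 [Hr1 Hr1']].
      set (del := Rmin (Rmin (r1/2) (h/2)) (e' / (2 * (Rabs d0 + eps/2 + 1)))).
      assert (Hdel: 0 < del) by (unfold del; repeat apply Rmin_pos; try lra; apply Rdiv_lt_0_compat; [lra| pose proof (Rabs_pos d0); lra]).
      assert (D1: del <= r1/2) by (unfold del; eapply Rle_trans; [apply Rmin_l| apply Rmin_l]).
      assert (D2: del <= h/2) by (unfold del; eapply Rle_trans; [apply Rmin_l| apply Rmin_r]).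
      assert (D3: del <= e' / (2 * (Rabs d0 + eps/2 + 1))) by (unfold del; apply Rmin_r).
      destruct (mvt_pos f df del h Hdel ltac:(lra) Hd) as [xi [Hxi E]].
      specialize (Hr' xi ltac:(lra)). apply Rabs_def2 in Hr'.
      specialize (Hr1' del ltac:(lra)). apply Rabs_def2 in Hr1'.
      assert (Hq: del * (Rabs d0 + eps/2) <= e'/2).
      { assert (del * (2 * (Rabs d0 + eps/2 + 1)) <= e').
        { apply Rmult_le_reg_r with (/ (2 * (Rabs d0 + eps/2 + 1))). apply Rinv_0_lt_compat. pose proof (Rabs_pos d0); lra.
          rewrite Rmult_assoc, Rinv_r by (pose proof (Rabs_pos d0); lra). lra. }
        pose proof (Rabs_pos d0). nra. }
      pose proof (Rle_abs d0). pose proof (Rle_abs (-d0)). rewrite Rabs_Ropp in H0.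
      assert (df xi * (h - del) >= (d0 - eps/2) * (h - del)) by (apply Rle_ge, Rmult_le_compat_r; lra).
      nra.
    - apply le_of_approx. intros e' He'.
      destruct (Hf (e'/2) ltac:(lra)) as [r1 [Hr1 Hr1']].
      set (del := Rmin (Rmin (r1/2) (h/2)) (e' / (2 * (Rabs d0 + eps/2 + 1)))).
      assert (Hdel: 0 < del) by (unfold del; repeat apply Rmin_pos; try lra; apply Rdiv_lt_0_compat; [lra| pose proof (Rabs_pos d0); lra]).
      assert (D1: del <= r1/2) by (unfold del; eapply Rle_trans; [apply Rmin_l| apply Rmin_l]).
      assert (D2: del <= h/2) by (unfold del; eapply Rle_trans; [apply Rmin_l| apply Rmin_r]).
      assert (D3: del <= e' / (2 * (Rabs d0 + eps/2 + 1))) by (unfold del; apply Rmin_r).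
      destruct (mvt_pos f df del h Hdel ltac:(lra) Hd) as [xi [Hxi E]].
      specialize (Hr' xi ltac:(lra)). apply Rabs_def2 in Hr'.
      specialize (Hr1' del ltac:(lra)). apply Rabs_def2 in Hr1'.
      assert (Hq: del * (Rabs d0 + eps/2) <= e'/2).
      { assert (del * (2 * (Rabs d0 + eps/2 + 1)) <= e').
        { apply Rmult_le_reg_r with (/ (2 * (Rabs d0 + eps/2 + 1))). apply Rinv_0_lt_compat. pose proof (Rabs_pos d0); lra.
          rewrite Rmult_assoc, Rinv_r by (pose proof (Rabs_pos d0); lra). lra. }
        pose proof (Rabs_pos d0). nra. }
      pose proof (Rle_abs d0). pose proof (Rle_abs (-d0)). rewrite Rabs_Ropp in H0.
      assert (df xi * (h - del) <= (d0 + eps/2) * (h - del)) by (apply Rmult_le_compat_r; lra).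
      nra. }
  replace ((f h - f 0) / h - d0) with ((f h - f 0 - d0 * h) / h) by (field; lra).
  unfold Rdiv. rewrite Rabs_mult, Rabs_inv, (Rabs_right h) by lra.
  apply Rle_lt_trans with (eps/2 * h * / h). apply Rmult_le_compat_r. left; apply Rinv_0_lt_compat; lra. exact B.
  replace (eps / 2 * h * / h) with (eps/2) by (field; lra). lra.
Qed.

Lemma v_right0 mu sigma c a lam v : Hyp mu sigma c a lam v ->
  forall eps, 0 < eps -> exists rho, 0 < rho /\ forall t, 0 <= t < rho -> v t < eps.
Proof.
  intros HH eps He. pose proof HH as [_ [[Hc _] _]].
  destruct (v_basic _ _ _ _ _ _ HH) as [H0 [Hm [M [HM0 HM]]]].
  destruct (Hc 0 (Rle_refl 0) eps He) as [d [Hd Hd']].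
  exists d. split; auto. intros t Ht. specialize (Hd' t ltac:(lra) ltac:(rewrite Rminus_0_r, Rabs_right; lra)).
  rewrite H0, Rminus_0_r in Hd'. apply Rabs_def2 in Hd'. lra.
Qed.

Lemma tangent mu sigma c a lam v : Hyp mu sigma c a lam v ->
  forall z w, 0 < z -> 0 <= w -> v w <= v z + Derive v z * (w - z).
Proof.
  intros HH z w Hz Hw.
  assert (HDv: forall x, 0 < x -> is_derive v x (Derive v x)) by (intros; apply (v_local _ _ _ _ _ _ HH); auto).
  assert (Pos: forall w, 0 < w -> v w <= v z + Derive v z * (w - z)).
  { intros w' Hw'. destruct (Rtotal_order w' z) as [H1|[H1|H1]].
    - destruct (mvt_pos v (Derive v) w' z Hw' H1 HDv) as [xi [Hxi E]].
      pose proof (Dv_noninc _ _ _ _ _ _ HH w' xi Hw' (proj1 Hxi)).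
      pose proof (Dv_noninc _ _ _ _ _ _ HH xi z ltac:(lra) (proj2 Hxi)).
      assert (Derive v xi * (z - w') >= Derive v z * (z - w')) by (apply Rle_ge, Rmult_le_compat_r; lra). lra.
    - subst. lra.
    - destruct (mvt_pos v (Derive v) z w' Hz H1 HDv) as [xi [Hxi E]].
      pose proof (Dv_noninc _ _ _ _ _ _ HH z xi Hz (proj1 Hxi)).
      assert (Derive v xi * (w' - z) <= Derive v z * (w' - z)) by (apply Rmult_le_compat_r; lra). lra. }
  destruct (Rlt_le_dec 0 w) as [Hw'|Hw']. apply Pos; auto.
  assert (w = 0) by lra. subst w.
  destruct (v_basic _ _ _ _ _ _ HH) as [H0 _]. rewrite H0.
  apply le_of_approx. intros e He.
  set (K := Rabs (Derive v z) + 1).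
  assert (HK: 0 < K) by (unfold K; pose proof (Rabs_pos (Derive v z)); lra).
  destruct (v_right0 _ _ _ _ _ _ HH (e/2) ltac:(lra)) as [r [Hr Hr']].
  set (d := Rmin (r/2) (e / (2*K))).
  assert (Hd: 0 < d) by (unfold d; apply Rmin_pos; try lra; apply Rdiv_lt_0_compat; lra).
  assert (D1: d <= r/2) by apply Rmin_l. assert (D2: d <= e/(2*K)) by apply Rmin_r.
  specialize (Pos d Hd). specialize (Hr' d ltac:(lra)).
  destruct (v_basic _ _ _ _ _ _ HH) as [_ [_ [M [_ HM]]]]. destruct (HM d ltac:(lra)) as [[Hv0 _] _].
  assert (Derive v z * d <= e/2).
  { assert (Derive v z * d <= K * d) by (apply Rmult_le_compat_r; [lra| unfold K; pose proof (Rle_abs (Derive v z)); lra]).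
    assert (Q2: K * d <= K * (e/(2*K))) by (apply Rmult_le_compat_l; lra).
    replace (K * (e/(2*K))) with (e/2) in Q2 by (field; lra). lra. }
  lra.
Qed.

Lemma concave_v mu sigma c a lam v : Hyp mu sigma c a lam v -> concave0 v.
Proof.
  intros HH x y t Hx Hy Ht.
  destruct (v_basic _ _ _ _ _ _ HH) as [H0 _].
  set (z := t * x + (1 - t) * y).
  destruct (Rlt_le_dec 0 z) as [Hz|Hz].
  - pose proof (tangent _ _ _ _ _ _ HH z x Hz Hx). pose proof (tangent _ _ _ _ _ _ HH z y Hz Hy).
    assert (E: t * (v z + Derive v z * (x - z)) + (1 - t) * (v z + Derive v z * (y - z)) = v z) by (unfold z; ring).
    assert (t * v x <= t * (v z + Derive v z * (x - z))) by (apply Rmult_le_compat_l; lra).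
    assert ((1-t) * v y <= (1-t) * (v z + Derive v z * (y - z))) by (apply Rmult_le_compat_l; lra).
    lra.
  - assert (E1: t * x = 0) by (unfold z in Hz; nra). assert (E2: (1 - t) * y = 0) by (unfold z in Hz; nra).
    assert (Hz0: z = 0) by (unfold z; lra). rewrite Hz0, H0.
    assert (t * v x = 0).
    { destruct (Req_dec t 0) as [Et|Et]. rewrite Et; ring. assert (x = 0) by (apply Rmult_integral in E1; destruct E1; [contradiction| auto]). subst; rewrite H0; ring. }
    assert ((1-t) * v y = 0).
    { destruct (Req_dec (1-t) 0) as [Et|Et]. rewrite Et; ring. assert (y = 0) by (apply Rmult_integral in E2; destruct E2; [contradiction| auto]). subst; rewrite H0; ring. }
    lra.
Qed.

Lemma Dv_lim0 mu sigma c a lam v : Hyp mu sigma c a lam v ->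
  forall eps, 0 < eps -> exists X, 0 < X /\ forall x, X <= x -> Derive v x < eps.
Proof.
  intros HH eps He.
  destruct (v_basic _ _ _ _ _ _ HH) as [H0 [Hm [M [HM0 HM]]]].
  assert (HDv: forall x, 0 < x -> is_derive v x (Derive v x)) by (intros; apply (v_local _ _ _ _ _ _ HH); auto).
  destruct (classic (exists X, 0 < X /\ Derive v X < eps)) as [[X [HX HX']]|Hn].
  - exists X. split; auto. intros x Hx. pose proof (Dv_noninc _ _ _ _ _ _ HH X x HX Hx). lra.
  - exfalso. set (T := 1 + (M+1)/eps).
    assert (HT: 1 < T) by (unfold T; assert (0 < (M+1)/eps) by (apply Rdiv_lt_0_compat; lra); lra).
    destruct (mvt_pos v (Derive v) 1 T ltac:(lra) HT HDv) as [xi [Hxi E]].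
    assert (eps <= Derive v xi) by (destruct (Rle_lt_dec eps (Derive v xi)); auto; exfalso; apply Hn; exists xi; split; [lra| auto]).
    assert (T - 1 = (M+1)/eps) by (unfold T; ring).
    assert (eps * ((M+1)/eps) = M+1) by (field; lra).
    assert (Derive v xi * (T-1) >= M + 1).
    { rewrite H1. assert (eps * ((M+1)/eps) <= Derive v xi * ((M+1)/eps)) by (apply Rmult_le_compat_r; [left; apply Rdiv_lt_0_compat; lra| auto]). lra. }
    destruct (HM T ltac:(lra)) as [[_ ?] _]. destruct (HM 1 ltac:(lra)) as [[? _] _]. lra.
Qed.

Lemma v_lim mu sigma c a lam v : Hyp mu sigma c a lam v -> is_lim v p_infty (fH mu lam a 0 / c).
Proof.
  intros HH. pose proof HH as [HA _].
  destruct (assumA_facts _ _ _ _ _ HA) as [Hs [Hc [Ha [Hl [Ha1 [Hma [Hcm Hsm]]]]]]].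
  destruct (v_basic _ _ _ _ _ _ HH) as [H0 [Hm [M [HM0 HM]]]].
  set (S := 1/2*sigma^2). assert (HS: 0 < S) by (unfold S; nra).
  set (F0 := fH mu lam a 0).
  assert (HFc: continuity_pt (fH mu lam a) 0) by (apply derive_cont, fH_ex_derive; auto).
  assert (HDv0: forall x, 0 < x -> 0 <= Derive v x) by (intros; apply (v_local _ _ _ _ _ _ HH); auto).
  assert (EH: forall t, c * v t - fH mu lam a (Derive v t) = S * gfun mu sigma c a lam v t) by (intros; unfold gfun; fold S; field; lra).
  destruct (sup_exists (fun x => 0 <= x) v) as [L [HL1 HL2]].
  { exists 0; lra. } { exists M. intros x Hx. apply HM; auto. }
  assert (Vlim: forall e, 0 < e -> exists X, 0 < X /\ forall y, X <= y -> L - e < v y <= L).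
  { intros e He. destruct (HL2 e He) as [x [Hx Hx']]. exists (x + 1). split. lra.
    intros y Hy. split. pose proof (Hm x y Hx ltac:(lra)). lra. apply HL1. lra. }
  assert (Flim: forall e, 0 < e -> exists X, 0 < X /\ forall y, X <= y -> Rabs (fH mu lam a (Derive v y) - F0) < e).
  { intros e He. destruct (cont_pt_elim _ _ HFc e He) as [d [Hd Hd']].
    destruct (Dv_lim0 _ _ _ _ _ _ HH d Hd) as [X [HX HX']]. exists X. split; auto.
    intros y Hy. apply Hd'. rewrite Rminus_0_r. rewrite Rabs_right. apply HX'; auto. apply Rle_ge, HDv0. lra. }
  assert (EL: c * L = F0).
  { destruct (Rtotal_order (c*L) F0) as [Hlt|[Heq|Hgt]]; auto; exfalso.
    - set (eta := (F0 - c*L)/2). assert (Heta: 0 < eta) by (unfold eta; lra).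
      destruct (Flim eta Heta) as [X [HX HX']].
      assert (Gneg: forall t, X <= t -> gfun mu sigma c a lam v t <= - eta / S).
      { intros t Ht. specialize (HX' t Ht). apply Rabs_def2 in HX'.
        assert (v t <= L) by (apply HL1; lra).
        assert (c * v t <= c * L) by (apply Rmult_le_compat_l; lra).
        assert (S * gfun mu sigma c a lam v t <= - eta) by (rewrite <- EH; unfold eta in *; lra).
        apply Rmult_le_reg_l with S. auto. replace (S * (- eta / S)) with (-eta) by (field; lra). auto. }
      set (T := (Derive v X + 1) * S / eta).
      assert (HT: 0 < T) by (unfold T; pose proof (HDv0 X HX); apply Rdiv_lt_0_compat; [apply Rmult_lt_0_compat|]; lra).
      destruct (mvt_pos (Derive v) (gfun mu sigma c a lam v) X (X + T) HX ltac:(lra)) as [xi [Hxi E]].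
      { intros; apply v_C2; auto. }
      specialize (Gneg xi ltac:(lra)).
      assert (gfun mu sigma c a lam v xi * (X + T - X) <= - eta / S * T) by (replace (X + T - X) with T by ring; apply Rmult_le_compat_r; lra).
      assert (- eta / S * T = - (Derive v X + 1)) by (unfold T; field; split; lra).
      pose proof (HDv0 (X+T) ltac:(lra)). lra.
    - set (eta := (c*L - F0)/2). assert (Heta: 0 < eta) by (unfold eta; lra).
      destruct (Flim eta Heta) as [X1 [HX1 HX1']].
      destruct (Vlim (eta / (2*c))) as [X2 [HX2 HX2']]. apply Rdiv_lt_0_compat; lra.
      set (t := X1 + X2).
      specialize (HX1' t ltac:(unfold t; lra)). specialize (HX2' t ltac:(unfold t; lra)).
      apply Rabs_def2 in HX1'.
      assert (c * v t > c * L - eta/2).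
      { assert (c * (L - eta/(2*c)) < c * v t) by (apply Rmult_lt_compat_l; lra).
        replace (c * (L - eta/(2*c))) with (c*L - eta/2) in H by (field; lra). lra. }
      pose proof (g_concave _ _ _ _ _ _ HH t ltac:(unfold t; lra)).
      assert (S * gfun mu sigma c a lam v t <= 0) by nra.
      rewrite <- EH in H2. unfold eta in *. lra. }
  apply lim_intro. intros e He.
  destruct (Vlim e He) as [X [HX HX']]. exists X. intros x Hx.
  replace (F0 / c) with L by (rewrite <- EL; field; lra).
  specialize (HX' x ltac:(lra)). apply Rabs_def1; lra.
Qed.

Theorem mainTheorem7 (mu sigma c a lam : R) (v : R -> R) :
  assumptionA mu sigma c a lam ->
  visc_sol mu sigma c a lam v -> classL v ->
  exists v1 v2 : R -> R,
    right_deriv0 v (v1 0) /\ 0 < v1 0 /\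
    (forall x, 0 < x -> is_derive v x (v1 x)) /\
    (forall x, 0 < x -> is_derive v1 x (v2 x)) /\
    right_deriv0 v1 (v2 0) /\
    cont0 v2 /\
    bounded0 v /\ bounded0 v1 /\ bounded0 v2 /\
    concave0 v /\
    is_lim v p_infty (fH mu lam a 0 / c) /\
    is_lim v1 p_infty 0.
Proof.
  intros HA Hsol HL.
  assert (HH: Hyp mu sigma c a lam v) by (split; [|split]; auto).
  destruct (assumA_facts _ _ _ _ _ HA) as [Hs [Hc [Ha [Hl [Ha1 [Hma [Hcm Hsm]]]]]]].
  destruct (v_basic _ _ _ _ _ _ HH) as [H0 [Hm [M [HM0 HM]]]].
  set (S := 1/2*sigma^2). assert (HS: 0 < S) by (unfold S; nra).
  set (Dv := Derive v). set (g := gfun mu sigma c a lam v).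
  assert (HDv: forall x, 0 < x -> is_derive v x (Dv x)) by (intros; apply (v_local _ _ _ _ _ _ HH); auto).
  assert (HDv0: forall x, 0 < x -> 0 <= Dv x) by (intros; apply (v_local _ _ _ _ _ _ HH); auto).
  assert (Hg: forall x, 0 < x -> is_derive Dv x (g x)) by (intros; apply v_C2; auto).
  assert (Hgc: forall x, 0 < x -> continuity_pt g x) by (intros; apply g_cont; auto).
  assert (EH: forall t, c * v t - fH mu lam a (Dv t) = S * g t) by (intros; unfold g, gfun, Dv; fold S; field; lra).
  destruct (Dv_bounded _ _ _ _ _ _ HH) as [B HB].
  destruct (sup_exists (fun x => 0 < x) Dv) as [l0 [HL1 HL2]].
  { exists 1; lra. } { exists B. auto. }
  assert (RL: forall e, 0 < e -> exists rho, 0 < rho /\ forall t, 0 < t < rho -> Rabs (Dv t - l0) < e).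
  { intros e He. destruct (HL2 e He) as [x [Hx Hx']]. exists x. split; auto. intros t Ht.
    pose proof (Dv_noninc _ _ _ _ _ _ HH t x (proj1 Ht) ltac:(lra)). fold Dv in H.
    pose proof (HL1 t (proj1 Ht)). apply Rabs_def1; lra. }
  assert (F0pos := fH_0_pos mu lam a Hl Ha1).
  assert (Hl0: 0 < l0).
  { destruct (Rlt_le_dec 0 l0) as [?|Hn]; auto. exfalso.
    assert (Z: forall x, 0 < x -> Dv x = 0) by (intros x Hx; pose proof (HL1 x Hx); pose proof (HDv0 x Hx); lra).
    assert (Gz: forall x, 0 < x -> g x = 0).
    { intros x Hx. assert (is_derive Dv x 0).
      { apply (is_derive_ext_loc (fun _ => 0)). apply locally_R. exists x. split; auto.
        intros y Hy. symmetry. apply Z. apply Rabs_def2 in Hy. lra. auto_derive; auto; try ring. }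
      rewrite <- (is_derive_unique _ _ _ H). symmetry. apply is_derive_unique. auto. }
    destruct (v_right0 _ _ _ _ _ _ HH (fH mu lam a 0 / c) ltac:(apply Rdiv_lt_0_compat; lra)) as [r [Hr Hr']].
    specialize (Hr' (r/2) ltac:(lra)). specialize (EH (r/2)). rewrite Z, Gz in EH by lra.
    assert (v (r/2) = fH mu lam a 0 / c) by (field_simplify_eq; lra). lra. }
  set (v1 := fun x => if Rlt_dec 0 x then Dv x else l0).
  set (v2 := fun x => (c * v x - fH mu lam a (v1 x)) / S).
  assert (E1: forall x, 0 < x -> v1 x = Dv x) by (intros x Hx; unfold v1; destruct (Rlt_dec 0 x); [auto| contradiction]).
  assert (E10: v1 0 = l0) by (unfold v1; destruct (Rlt_dec 0 0); [lra| auto]).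
  assert (E2: forall x, 0 < x -> v2 x = g x) by (intros x Hx; unfold v2, g, gfun; rewrite E1 by auto; fold S; auto).
  assert (V1range: forall x, 0 <= x -> 0 <= v1 x <= l0).
  { intros x Hx. destruct (Rlt_le_dec 0 x) as [Hx'|Hx']. rewrite E1 by auto. split; [apply HDv0| apply HL1]; auto.
    assert (Ex0: x = 0) by lra. rewrite Ex0, E10. lra. }
  assert (V2lim: forall e, 0 < e -> exists rho, 0 < rho /\ forall t, 0 < t < rho -> Rabs (v2 t - v2 0) < e).
  { intros e He.
    assert (HFc: continuity_pt (fH mu lam a) l0) by (apply derive_cont, fH_ex_derive; auto).
    destruct (cont_pt_elim _ _ HFc (e*S/2) ltac:(nra)) as [d [Hd Hd']].
    destruct (RL d Hd) as [r1 [Hr1 Hr1']].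
    destruct (v_right0 _ _ _ _ _ _ HH (e*S/(2*c)) ltac:(apply Rdiv_lt_0_compat; nra)) as [r2 [Hr2 Hr2']].
    exists (Rmin r1 r2). split. apply Rmin_pos; auto. intros t Ht.
    pose proof (Rmin_l r1 r2). pose proof (Rmin_r r1 r2).
    specialize (Hd' (Dv t) (Hr1' t ltac:(lra))). specialize (Hr2' t ltac:(lra)).
    destruct (HM t ltac:(lra)) as [[Hvt _] _].
    unfold v2. rewrite E1 by lra. rewrite E10, H0.
    replace ((c * v t - fH mu lam a (Dv t)) / S - (c * 0 - fH mu lam a l0) / S) with ((c * v t - (fH mu lam a (Dv t) - fH mu lam a l0)) / S) by (field; lra).
    unfold Rdiv. rewrite Rabs_mult, Rabs_inv, (Rabs_right S) by lra.
    apply Rmult_lt_reg_r with S. auto. rewrite Rmult_assoc, Rinv_l, Rmult_1_r by lra.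
    assert (c * v t < e * S / 2).
    { apply Rmult_lt_reg_r with (/ c). apply Rinv_0_lt_compat; lra.
      replace (c * v t * / c) with (v t) by (field; lra). replace (e * S / 2 * / c) with (e * S / (2*c)) by (field; lra). auto. }
    eapply Rle_lt_trans. apply Rabs_triang. rewrite Rabs_Ropp. rewrite Rabs_right by nra. lra. }
  exists v1, v2.
  split; [|split; [|split; [|split; [|split; [|split; [|split; [|split; [|split; [|split; [|split]]]]]]]]]].
  -
    rewrite E10. unfold right_deriv0. apply (RD2 v Dv l0 HDv).
    + intros e He. destruct (v_right0 _ _ _ _ _ _ HH e He) as [r [Hr Hr']]. exists r. split; auto.
      intros t Ht. rewrite H0, Rminus_0_r. destruct (HM t ltac:(lra)) as [[Hvt _] _]. rewrite Rabs_right by lra. apply Hr'; lra.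
    + exact RL.
  - rewrite E10; auto.
  - intros x Hx. rewrite E1 by auto. auto.
  - intros x Hx. rewrite E2 by auto. apply (is_derive_ext_loc Dv). apply locally_R. exists x. split; auto.
    intros y Hy. symmetry. apply E1. apply Rabs_def2 in Hy. lra. auto.
  - unfold right_deriv0. apply (RD2 v1 v2 (v2 0)).
    + intros x Hx. rewrite E2 by auto. apply (is_derive_ext_loc Dv). apply locally_R. exists x. split; auto.
      intros y Hy. symmetry. apply E1. apply Rabs_def2 in Hy. lra. auto.
    + intros e He. destruct (RL e He) as [r [Hr Hr']]. exists r. split; auto. intros t Ht. rewrite E1, E10 by lra. auto.
    + exact V2lim.
  -
    intros x Hx e He. destruct (Rlt_le_dec 0 x) as [Hx'|Hx'].
    + destruct (cont_pt_elim g x (Hgc x Hx') e He) as [d [Hd Hd']].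
      exists (Rmin d (x/2)). split. apply Rmin_pos; lra. intros y Hy Hyx.
      pose proof (Rmin_l d (x/2)). pose proof (Rmin_r d (x/2)). apply Rabs_def2 in Hyx as Hyx'.
      rewrite E2, E2 by lra. apply Hd'. lra.
    + assert (Ex: x = 0) by lra. rewrite Ex in *. destruct (V2lim e He) as [r [Hr Hr']]. exists r. split; auto.
      intros y Hy Hyx. destruct (Rlt_le_dec 0 y) as [Hy'|Hy'].
      * apply Hr'. rewrite Rminus_0_r, Rabs_right in Hyx by lra. lra.
      * assert (Ey: y = 0) by lra. rewrite Ey, Rminus_diag, Rabs_R0. lra.
  - exists M. intros x Hx. apply HM; auto.
  - exists l0. intros x Hx. destruct (V1range x Hx). rewrite Rabs_right; lra.
  - destruct (fH_low mu lam a Hl Ha ltac:(lra)) as [m0 Hm0].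
    exists ((Rabs (mu * l0 + (lam * ln a + a)) + Rabs (c * M - m0)) / S).
    intros x Hx. destruct (V1range x Hx) as [Va Vb]. destruct (HM x Hx) as [[Hv0 HvM] _].
    pose proof (Hm0 (v1 x) Va). pose proof (fH_up mu lam a Hl Ha ltac:(lra) (v1 x) Va).
    unfold v2. unfold Rdiv. rewrite Rabs_mult, Rabs_inv, (Rabs_right S) by lra.
    apply Rmult_le_compat_r. left; apply Rinv_0_lt_compat; lra.
    pose proof (Rle_abs (mu * l0 + (lam * ln a + a))). pose proof (Rle_abs (c * M - m0)).
    pose proof (Rabs_pos (mu * l0 + (lam * ln a + a))). pose proof (Rabs_pos (c * M - m0)).
    assert (c * v x <= c * M) by (apply Rmult_le_compat_l; lra).
    assert (0 <= c * v x) by nra.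
    assert (mu * v1 x <= mu * l0) by (apply Rmult_le_compat_l; lra).
    apply Rabs_le. lra.
  - apply (concave_v mu sigma c a lam); auto.
  - apply (v_lim mu sigma c a lam); auto.
  - apply lim_intro. intros e He. destruct (Dv_lim0 _ _ _ _ _ _ HH e He) as [X [HX HX']].
    exists X. intros x Hx. rewrite E1 by lra. rewrite Rminus_0_r. rewrite Rabs_right by (apply Rle_ge, HDv0; lra). apply HX'; lra.
Qed.
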